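(* Fix $i$ and let $N_{i1},\dots,N_{iT_i}$ be independent with $N_{it}\sim\mathrm{NB}(\lambda_{it},\alpha)$, where $\lambda_{it}=\exp(x_{it}^T\beta)$ for fixed covariates $x_{it}\in\mathbb{R}^p$ and $\alpha>0$. Let $\ell_i(\beta,\alpha)=\sum_t\log\Pr(N_{it})$ be the negative binomial log-likelihood, so that $\frac{\partial\ell_i}{\partial\beta}=\sum_t\frac{N_{it}-\lambda_{it}}{1+\alpha\lambda_{it}}x_{it}$, and let $$\frac{\partial\ell_i}{\partial\sigma^2}:=\frac12\left(\Big(\sum_t\frac{N_{it}-\lambda_{it}}{1+\alpha\lambda_{it}}\Big)^2-\sum_t\frac{N_{it}(1+\alpha\lambda_{it})^2-\alpha^2N_{it}\lambda_{it}^2-\alpha\lambda_{it}^2}{(1+\alpha\lambda_{it})^2}\right)$$ denote the score for $\sigma^2$ at $\sigma^2=0$. Then $$E\Big[\Big(\frac{\partial\ell_i}{\partial\sigma^2}\Big)^2\Big]=\frac14\left(\sum_t\frac{2\lambda_{it}^2(1+\alpha)}{(1+\alpha\lambda_{it})^2}+4\sum_{t<t'}\frac{\lambda_{it}(1+\alpha\lambda_{it})}{(1+\alpha\lambda_{it})^2}\frac{\lambda_{it'}(1+\alpha\lambda_{it'})}{(1+\alpha\lambda_{it'})^2}\right),$$ $$E\Big[\frac{\partial\ell_i}{\partial\sigma^2}\frac{\partial\ell_i}{\partial\beta}\Big]=0,\qquad E\Big[\frac{\partial\ell_i}{\partial\sigma^2}\frac{\partial\ell_i}{\partial\alpha}\Big]=\frac12\sum_t\frac{\lambda_{it}^2}{(1+\alpha\lambda_{it})^2},\qquad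 E\Big[-\frac{\partial^2\ell_i}{\partial\beta\,\partial\alpha}\Big]=0,$$ $$E\Big[\Big(\frac{\partial\ell_i}{\partial\alpha}\Big)^2\Big]=\sum_t\alpha^{-4}\left(\sum_{j=0}^\infty(\alpha^{-1}+j)^{-2}\Pr(N_{it}\ge j+1)-\frac{\alpha\lambda_{it}}{\lambda_{it}+\alpha^{-1}}\right).$$
   Context: $\mathrm{NB}(\lambda,\alpha)$ is the negative binomial distribution with mean $\lambda$ and variance $\lambda+\alpha\lambda^2$: $\Pr(N=n)=\frac{\Gamma(n+1/\alpha)}{\Gamma(1/\alpha)\,n!}\left(\frac{1}{1+\alpha\lambda}\right)^{1/\alpha}\left(\frac{\alpha\lambda}{1+\alpha\lambda}\right)^n$. The quantity $\partial\ell_i/\partial\sigma^2$ is the score, at $\sigma^2=0$, for the variance $\sigma^2$ of a mean-one shared random effect $\theta_i$ in the model $N_{it}\mid\theta_i\sim\mathrm{NB}(\lambda_{it}\theta_i,\alpha)$. *)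

(* Defs.v *)
From Stdlib Require Import Reals Lra Arith Factorial.
From Coquelicot Require Import Coquelicot.
Open Scope R_scope.

Fixpoint sumT (n : nat) (f : nat -> R) : R :=
  match n with O => 0 | S m => sumT m f + f m end.

(* rising factorial r (r+1) ... (r+n-1) = Gamma(n+r)/Gamma(r)  (r > 0) *)
Fixpoint rising (r : R) (n : nat) : R :=
  match n with O => 1 | S m => rising r m * (r + INR m) end.

Definition nb_pmf (lam a : R) (n : nat) : R :=
  rising (/ a) n / INR (Factorial.fact n)
  * Rpower (/ (1 + a * lam)) (/ a)
  * (a * lam / (1 + a * lam)) ^ n.

Definition upd {A : Type} (f : nat -> A) (k : nat) (v : A) : nat -> A :=
  fun j => if Nat.eqb j k then v else f j.

(* covariates x t k (t < T, k < p), coefficient vector b k (k < p) *)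
Definition lam (p : nat) (x : nat -> nat -> R) (b : nat -> R) (t : nat) : R :=
  exp (sumT p (fun k => x t k * b k)).

Definition loglik (T p : nat) (x : nat -> nat -> R) (b : nat -> R) (a : R)
  (N : nat -> nat) : R :=
  sumT T (fun t => ln (nb_pmf (lam p x b t) a (N t))).

Definition score_beta T p x b a N (k : nat) : R :=
  Derive (fun bk => loglik T p x (upd b k bk) a N) (b k).

Definition score_alpha T p x b a N : R :=
  Derive (fun a' => loglik T p x b a' N) a.

Definition d2_beta_alpha T p x b a N (k : nat) : R :=
  Derive (fun a' => score_beta T p x b a' N k) a.

Definition score_sigma2 (T : nat) (l : nat -> R) (a : R) (N : nat -> nat) : R :=
  / 2 * ((sumT T (fun t => (INR (N t) - l t) / (1 + a * l t))) ^ 2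
   - sumT T (fun t => (INR (N t) * (1 + a * l t) ^ 2 - a ^ 2 * INR (N t) * l t ^ 2
                       - a * l t ^ 2) / (1 + a * l t) ^ 2)).

(* Expectation of f(N_0,...,N_{T-1}) for independent N_t with pmf pm t:
   iterated series over the coordinates. *)
Fixpoint Eiter (pm : nat -> nat -> R) (k : nat) (f : (nat -> nat) -> R)
  (env : nat -> nat) : R :=
  match k with
  | O => f env
  | S m => Series (fun n => pm m n * Eiter pm m f (upd env m n))
  end.

Definition Expect (T : nat) (pm : nat -> nat -> R) (f : (nat -> nat) -> R) : R :=
  Eiter pm T f (fun _ => O).

Definition tail_prob (q : nat -> R) (m : nat) : R := Series (fun n => q (n + m)%nat).

(* Main.v *)
Require Import Defs.
From Stdlib Require Import Reals Lra Lia Arith Factorial FunctionalExtensionality List.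
From Coquelicot Require Import Coquelicot.
Import ListNotations.
Open Scope R_scope.

Lemma rising_pos s n : 0 < s -> 0 < rising s n.
Proof. intros Hs; induction n; simpl. lra. apply Rmult_lt_0_compat; auto. pose proof (pos_INR n); lra. Qed.

Lemma rising_add r n k : rising r (n + k) = rising r n * rising (r + INR n) k.
Proof. induction k; simpl. rewrite Nat.add_0_r; ring.
  rewrite Nat.add_succ_r; simpl. rewrite IHk, plus_INR. ring. Qed.

Definition cc (s : R) (n : nat) : R := rising s n / INR (fact n).

Lemma INR_fact_pos n : 0 < INR (fact n).
Proof. apply lt_0_INR. apply lt_O_fact. Qed.

Lemma cc_pos s n : 0 < s -> 0 < cc s n.
Proof. intros; unfold cc. apply Rdiv_lt_0_compat. now apply rising_pos. apply INR_fact_pos. Qed.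

Lemma cc_S s n : cc s (S n) = cc s n * (s + INR n) / (INR n + 1).
Proof. unfold cc. simpl rising. rewrite fact_simpl, mult_INR, S_INR.
  pose proof (INR_fact_pos n). pose proof (pos_INR n). field. lra. Qed.

Lemma cc_shift s n k : cc s n * rising (s + INR n) k = rising s k * cc (s + INR k) n.
Proof. unfold cc. pose proof (INR_fact_pos n).
  assert (rising s n * rising (s + INR n) k = rising s k * rising (s + INR k) n).
  { rewrite <- rising_add, <- rising_add. now rewrite Nat.add_comm. }
  unfold Rdiv. rewrite Rmult_assoc, (Rmult_comm (/ _)), <- Rmult_assoc, H0. ring. Qed.

Lemma lim_ratio s : 0 < s -> is_lim_seq (fun n => Rabs (cc s (S n) / cc s n)) 1.
Proof.
  intros Hs.
  apply is_lim_seq_ext with (fun n => 1 + (s - 1) * / INR (S n)).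
  { intros n. rewrite cc_S. pose proof (cc_pos s n Hs). pose proof (pos_INR n).
    rewrite S_INR. rewrite Rabs_pos_eq. field. split; lra.
    apply Rlt_le. apply Rdiv_lt_0_compat; [apply Rdiv_lt_0_compat|]; try lra.
    apply Rmult_lt_0_compat; lra. }
  assert (H0 : is_lim_seq (fun n => / INR (S n)) 0).
  { apply -> (is_lim_seq_incr_1 (fun n => / INR n)).
    replace (Finite 0) with (Rbar_inv p_infty) by reflexivity.
    apply is_lim_seq_inv. apply is_lim_seq_INR. discriminate. }
  pose proof (is_lim_seq_scal_l _ (s-1) _ H0) as H1.
  replace (Rbar_mult (s-1) 0) with (Finite ((s-1)*0)) in H1 by reflexivity.
  pose proof (is_lim_seq_plus' _ _ _ _ (is_lim_seq_const 1) H1) as H2.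
  replace (1 + (s-1)*0) with 1 in H2 by ring. exact H2.
Qed.

Lemma radius_cc s : 0 < s -> CV_radius (cc s) = 1.
Proof. intros Hs. rewrite (CV_radius_finite_DAlembert _ 1). f_equal; field.
  intros n; pose proof (cc_pos s n Hs); lra. lra. now apply lim_ratio. Qed.

Lemma lt_radius_cc s x : 0 < s -> Rabs x < 1 -> Rbar_lt (Rabs x) (CV_radius (cc s)).
Proof. intros; rewrite radius_cc; auto. Qed.

Lemma ex_cc s x : 0 < s -> Rabs x < 1 -> ex_series (fun n => Rabs (cc s n * x ^ n)).
Proof. intros. apply CV_disk_inside. now apply lt_radius_cc. Qed.

Lemma Series_nonneg a : (forall n, 0 <= a n) -> ex_series a -> 0 <= Series a.
Proof. intros H1 H2. 
  assert (Series (fun n => 0 * a n) <= Series a).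
  { apply Series_le; auto. intros n; specialize (H1 n); split; lra. }
  rewrite Series_scal_l in H. lra. Qed.

Lemma term_le_Series a n : (forall n, 0 <= a n) -> ex_series a -> a n <= Series a.
Proof. intros H1 H2. rewrite (Series_incr_n a (S n)); [|lia|auto]. simpl pred.
  assert (0 <= Series (fun k => a (S n + k)%nat)).
  { apply Series_nonneg. auto. apply (ex_series_incr_n a (S n)) in H2. auto. }
  destruct n; simpl in *. lra.
  assert (0 <= sum_f_R0 a n). { apply cond_pos_sum. auto. }
  lra. Qed.

Lemma radius_dom (b : nat -> R) s K : 0 < s -> 0 <= K ->
  (forall n, Rabs (b n) <= K * cc s n) -> forall x, Rabs x < 1 -> Rbar_lt (Rabs x) (CV_radius b).
Proof.
  intros Hs HK Hb x Hx.
  set (z := (Rabs x + 1) / 2).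
  assert (Hz : Rabs x < z /\ z < 1) by (unfold z; split; lra).
  assert (Hz0 : 0 <= z) by (pose proof (Rabs_pos x); lra).
  destruct (CV_radius_bounded b) as [Hub _].
  assert (Rbar_le z (CV_radius b)).
  { apply Hub. exists (K * Series (fun n => Rabs (cc s n * z ^ n))).
    intros n. rewrite Rabs_mult. 
    apply Rle_trans with (K * cc s n * Rabs (z ^ n)).
    apply Rmult_le_compat_r. apply Rabs_pos. auto.
    rewrite Rmult_assoc. apply Rmult_le_compat_l; auto.
    assert (Rabs (cc s n * z ^ n) = cc s n * Rabs (z^n)).
    { rewrite Rabs_mult, Rabs_pos_eq. auto. pose proof (cc_pos s n Hs); lra. }
    rewrite <- H. apply (term_le_Series (fun n => Rabs (cc s n * z ^ n))).
    intros; apply Rabs_pos. apply ex_cc; auto. rewrite Rabs_pos_eq; lra. }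
  destruct (CV_radius b) as [r| |]; simpl in *; auto; lra.
Qed.

Lemma exs_scal c a : ex_series a -> ex_series (fun n => c * a n).
Proof. intros H. exact (ex_series_scal_l c a H). Qed.
Lemma exs_plus a b : ex_series a -> ex_series b -> ex_series (fun n => a n + b n).
Proof. intros H1 H2. exact (ex_series_plus a b H1 H2). Qed.
Lemma exs_ext (a b : nat -> R) : (forall n, a n = b n) -> ex_series a -> ex_series b.
Proof. intros H1 H2. apply (ex_series_ext a); auto. Qed.
Lemma exs_pser a x : Rbar_lt (Rabs x) (CV_radius a) -> ex_series (fun n => a n * x ^ n).
Proof. intros H. apply ex_series_Rabs. now apply CV_disk_inside. Qed.

Lemma pseries_ode (b f : nat -> R) r x :
  (forall n, INR (S n) * b (S n) = (r + INR n) * b n + f n) ->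
  Rbar_lt (Rabs x) (CV_radius b) -> Rbar_lt (Rabs x) (CV_radius f) ->
  (1 - x) * PSeries (PS_derive b) x = r * PSeries b x + PSeries f x.
Proof.
  intros Hrec Hb Hf.
  assert (Hd : Rbar_lt (Rabs x) (CV_radius (PS_derive b))) by (now rewrite CV_radius_derive).
  pose proof (exs_pser _ _ Hb) as Eb. pose proof (exs_pser _ _ Hf) as Ef.
  pose proof (exs_pser _ _ Hd) as Ed.
  assert (En : ex_series (fun k => INR k * b k * x ^ k)).
  { apply ex_series_incr_1. apply exs_ext with (fun k => x * (PS_derive b k * x ^ k)).
    intros k. unfold PS_derive. simpl. ring. now apply exs_scal. }
  assert (Sn : Series (fun k => INR k * b k * x ^ k) = x * PSeries (PS_derive b) x).
  { rewrite Series_incr_1; auto. simpl. unfold PSeries. rewrite <- Series_scal_l.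
    rewrite Rmult_0_l, Rmult_0_l, Rplus_0_l. apply Series_ext. intros k. unfold PS_derive. simpl. ring. }
  assert (PSeries (PS_derive b) x = r * PSeries b x + Series (fun k => INR k * b k * x ^ k) + PSeries f x).
  { unfold PSeries. assert (E1 := exs_scal r _ Eb). assert (E2 := exs_plus _ _ E1 En).
    rewrite <- Series_scal_l, <- (Series_plus _ _ E1 En), <- (Series_plus _ _ E2 Ef).
    apply Series_ext. intros k. unfold PS_derive. rewrite Hrec. ring. }
  rewrite Sn in H. lra.
Qed.

Lemma zero_deriv_const (f : R -> R) :
  (forall y, -1 < y < 1 -> is_derive f y 0) -> forall x, -1 < x < 1 -> f x = f 0.
Proof.
  intros Hd x Hx.
  destruct (MVT_gen f 0 x (fun _ => 0)) as [c [Hc Heq]].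
  - intros y Hy. apply Hd. unfold Rmin, Rmax in Hy; destruct (Rle_dec 0 x); lra.
  - intros y Hy. apply continuity_pt_filterlim.
    assert (Hy' : -1 < y < 1) by (unfold Rmin, Rmax in Hy; destruct (Rle_dec 0 x); lra).
    apply (@ex_derive_continuous R_AbsRing R_NormedModule f y). exists 0. now apply Hd.
  - lra.
Qed.

Lemma is_derive_E s y : y < 1 ->
  is_derive (fun y => exp (s * ln (1 - y))) y (- (s / (1 - y)) * exp (s * ln (1 - y))).
Proof. intros Hy. auto_derive. lra. replace (1 + - y) with (1 - y) by ring. field. lra. Qed.

Lemma is_derive_ln1 y : y < 1 -> is_derive (fun y => ln (1 - y)) y (- / (1 - y)).
Proof. intros Hy. auto_derive. lra. replace (1 + - y) with (1 - y) by ring. field. lra. Qed.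

Lemma PS_cc s x : 0 < s -> -1 < x < 1 -> exp (s * ln (1 - x)) * PSeries (cc s) x = 1.
Proof.
  intros Hs Hx.
  set (Phi := fun y => exp (s * ln (1 - y)) * PSeries (cc s) y).
  change (Phi x = 1).
  replace 1 with (Phi 0).
  2:{ unfold Phi. rewrite PSeries_0. unfold cc. simpl. rewrite Rminus_0_r, ln_1, Rmult_0_r, exp_0. field. }
  apply zero_deriv_const; auto.
  intros y Hy. unfold Phi.
  assert (Hr : Rbar_lt (Rabs y) (CV_radius (cc s))) by (apply lt_radius_cc; auto; apply Rabs_def1; lra).
  assert (Hode := pseries_ode (cc s) (fun _ => 0) s y).
  rewrite PSeries_const_0 in Hode.
  assert (H0 : (1 - y) * PSeries (PS_derive (cc s)) y = s * PSeries (cc s) y + 0).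
  { apply Hode; auto. intros n. rewrite cc_S, S_INR. pose proof (pos_INR n). field. lra.
    rewrite CV_radius_const_0. simpl. auto. }
  evar (d : R). replace 0 with d. apply (is_derive_mult (fun y => exp (s * ln (1 - y))) (PSeries (cc s))).
  apply is_derive_E. lra. apply is_derive_PSeries; auto. intros; apply Rmult_comm.
  unfold d. unfold plus, mult; simpl. 
  apply Rmult_eq_reg_l with (1 - y). 2: lra.
  rewrite Rmult_0_r. 
  replace ((1 - y) * (- (s / (1 - y)) * exp (s * ln (1 - y)) * PSeries (cc s) y +
     exp (s * ln (1 - y)) * PSeries (PS_derive (cc s)) y))
   with (exp (s * ln (1 - y)) * ((1 - y) * PSeries (PS_derive (cc s)) y - s * PSeries (cc s) y)) by (field; lra).
  rewrite H0. ring.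
Qed.

Lemma exs_le (a b : nat -> R) : (forall n, Rabs (a n) <= b n) -> ex_series b -> ex_series a.
Proof. intros H1 H2. apply (@ex_series_le R_AbsRing R_CompleteNormedModule a b); auto. Qed.

Definition Dr (r : R) (n : nat) : R := sumT n (fun j => / (r + INR j)).
Definition D2r (r : R) (n : nat) : R := sumT n (fun j => / (r + INR j) ^ 2).

Lemma Dr_S r n : Dr r (S n) = Dr r n + / (r + INR n).
Proof. reflexivity. Qed.
Lemma D2r_S r n : D2r r (S n) = D2r r n + / (r + INR n) ^ 2.
Proof. reflexivity. Qed.

Lemma Dr_bound r n : 0 < r -> 0 <= Dr r n <= INR n / r.
Proof. intros Hr. induction n. unfold Dr, D2r; simpl. unfold Rdiv; lra.
  rewrite Dr_S, S_INR. pose proof (pos_INR n).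
  assert (0 < / (r + INR n) <= / r).
  { split. apply Rinv_0_lt_compat; lra. apply Rinv_le_contravar; lra. }
  unfold Rdiv in *. rewrite Rmult_plus_distr_r. lra. Qed.

Lemma D2r_bound r n : 0 < r -> 0 <= D2r r n <= INR n / r ^ 2.
Proof. intros Hr. induction n. unfold Dr, D2r; simpl. unfold Rdiv; lra.
  rewrite D2r_S, S_INR. pose proof (pos_INR n).
  assert (0 < / (r + INR n) ^ 2 <= / r ^ 2).
  { split. apply Rinv_0_lt_compat. apply pow_lt; lra. apply Rinv_le_contravar. apply pow_lt; lra.
    apply pow_incr; lra. }
  unfold Rdiv in *. rewrite Rmult_plus_distr_r. lra. Qed.

Lemma cc1 r n : cc r n * (r + INR n) = r * cc (r + 1) n.
Proof. pose proof (cc_shift r n 1). simpl in H. rewrite !Rmult_1_l, !Rplus_0_r in H. exact H. Qed.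
Lemma cc2 r n : cc r n * ((r + INR n) * (r + INR n + 1)) = r * (r + 1) * cc (r + 2) n.
Proof. pose proof (cc_shift r n 2). simpl in H. rewrite !Rmult_1_l in H.
  replace (1 + 1) with 2 in H by ring. rewrite !Rplus_0_r in H. rewrite H. ring. Qed.

Lemma radius_ccD r x : 0 < r -> Rabs x < 1 -> Rbar_lt (Rabs x) (CV_radius (fun n => cc r n * Dr r n)).
Proof. intros Hr Hx. apply (radius_dom _ (r+1) 1); try lra; auto.
  intros n. pose proof (cc_pos r n Hr). destruct (Dr_bound r n Hr). pose proof (pos_INR n).
  rewrite Rabs_pos_eq by (apply Rmult_le_pos; lra).
  rewrite Rmult_1_l. apply Rmult_le_reg_l with r; auto. rewrite <- cc1.
  apply Rle_trans with (cc r n * INR n). 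
  replace (r * (cc r n * Dr r n)) with (cc r n * (r * Dr r n)) by ring.
  apply Rmult_le_compat_l. lra. apply Rmult_le_reg_r with (/ r). apply Rinv_0_lt_compat; lra.
  replace (r * Dr r n * / r) with (Dr r n) by (field; lra). exact H1.
  apply Rmult_le_compat_l; lra. Qed.

Lemma radius_ccE r x : 0 < r -> Rabs x < 1 ->
  Rbar_lt (Rabs x) (CV_radius (fun n => cc r n * (Dr r n ^ 2 - D2r r n))).
Proof. intros Hr Hx. apply (radius_dom _ (r+2) ((r * (r+1)) / r ^ 2)); try lra; auto.
  apply Rmult_le_pos. apply Rmult_le_pos; lra. apply Rlt_le, Rinv_0_lt_compat, pow_lt; lra.
  intros n. pose proof (cc_pos r n Hr). destruct (Dr_bound r n Hr). destruct (D2r_bound r n Hr). 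
  pose proof (pos_INR n).
  rewrite Rabs_mult, Rabs_pos_eq by lra.
  assert (Rabs (Dr r n ^ 2 - D2r r n) <= (INR n / r) ^ 2 + INR n / r ^ 2).
  { apply Rabs_le. assert (Dr r n ^ 2 <= (INR n / r) ^ 2). apply pow_incr; lra.
    assert (0 <= Dr r n ^ 2) by (apply pow2_ge_0). split; lra. }
  apply Rle_trans with (cc r n * ((INR n / r) ^ 2 + INR n / r ^ 2)).
  apply Rmult_le_compat_l; lra.
  replace (r * (r + 1) / r ^ 2 * cc (r + 2) n) with (cc r n * ((r + INR n) * (r + INR n + 1)) / r ^ 2)
    by (rewrite cc2; field; lra).
  unfold Rdiv. rewrite Rmult_assoc. apply Rmult_le_compat_l. lra.
  replace ((INR n * / r) ^ 2 + INR n * / r ^ 2) with ((INR n * INR n + INR n) * / r ^ 2) by (field; lra).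
  apply Rmult_le_compat_r. apply Rlt_le, Rinv_0_lt_compat, pow_lt; lra.
  nra. Qed.

Lemma radius_cc' s x : 0 < s -> Rabs x < 1 -> Rbar_lt (Rabs x) (CV_radius (cc s)).
Proof. apply lt_radius_cc. Qed.

Lemma radius_scal2 (a : nat -> R) x : Rbar_lt (Rabs x) (CV_radius a) ->
  Rbar_lt (Rabs x) (CV_radius (fun n => 2 * a n)).
Proof. intros H. replace (fun n => 2 * a n) with (PS_scal 2 a). rewrite CV_radius_scal; auto.
  all: try reflexivity. all: apply Rgt_not_eq; lra. Qed.

Lemma PS_G r x : 0 < r -> -1 < x < 1 ->
  exp (r * ln (1 - x)) * PSeries (fun n => cc r n * Dr r n) x = - ln (1 - x).
Proof.
  intros Hr Hx.
  set (G := PSeries (fun n => cc r n * Dr r n)).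
  set (Phi := fun y => exp (r * ln (1 - y)) * G y + ln (1 - y)).
  enough (Phi x = 0) by (unfold Phi in H; lra).
  replace 0 with (Phi 0).
  2:{ unfold Phi, G. rewrite PSeries_0. unfold Dr. simpl. rewrite Rminus_0_r, ln_1. ring. }
  apply zero_deriv_const; auto.
  intros y Hy. unfold Phi.
  assert (Hay : Rabs y < 1) by (apply Rabs_def1; lra).
  assert (H0 : (1 - y) * PSeries (PS_derive (fun n => cc r n * Dr r n)) y = r * G y + PSeries (cc r) y).
  { apply pseries_ode. intros n. rewrite cc_S, Dr_S, S_INR. pose proof (pos_INR n). field. lra.
    now apply radius_ccD. now apply lt_radius_cc. }
  pose proof (PS_cc r y Hr Hy) as HF.
  evar (d : R). replace 0 with d.
  apply (is_derive_plus (fun y => exp (r * ln (1 - y)) * G y)).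
  apply (is_derive_mult (fun y => exp (r * ln (1 - y))) G).
  apply is_derive_E. lra. apply is_derive_PSeries; now apply radius_ccD. intros; apply Rmult_comm.
  apply is_derive_ln1; lra.
  unfold d, plus, mult; simpl.
  apply Rmult_eq_reg_l with (1 - y). 2: lra.
  rewrite Rmult_0_r. 
  replace ((1 - y) * (- (r / (1 - y)) * exp (r * ln (1 - y)) * G y +
     exp (r * ln (1 - y)) * PSeries (PS_derive (fun n => cc r n * Dr r n)) y + - / (1 - y)))
   with (exp (r * ln (1 - y)) * ((1 - y) * PSeries (PS_derive (fun n => cc r n * Dr r n)) y - r * G y) - 1) by (field; lra).
  rewrite H0. transitivity (exp (r * ln (1 - y)) * PSeries (cc r) y - 1). ring. rewrite HF; ring.
Qed.

Lemma PS_E r x : 0 < r -> -1 < x < 1 ->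
  exp (r * ln (1 - x)) * PSeries (fun n => cc r n * (Dr r n ^ 2 - D2r r n)) x = ln (1 - x) ^ 2.
Proof.
  intros Hr Hx.
  set (G := PSeries (fun n => cc r n * (Dr r n ^ 2 - D2r r n))).
  set (Phi := fun y => exp (r * ln (1 - y)) * G y - ln (1 - y) ^ 2).
  enough (Phi x = 0) by (unfold Phi in H; lra).
  replace 0 with (Phi 0).
  2:{ unfold Phi, G. rewrite PSeries_0. unfold Dr, D2r. simpl. rewrite Rminus_0_r, ln_1. ring. }
  apply zero_deriv_const; auto.
  intros y Hy. unfold Phi.
  assert (Hay : Rabs y < 1) by (apply Rabs_def1; lra).
  assert (H0 : (1 - y) * PSeries (PS_derive (fun n => cc r n * (Dr r n ^ 2 - D2r r n))) y
     = r * G y + PSeries (fun n => 2 * (cc r n * Dr r n)) y).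
  { apply pseries_ode. intros n. rewrite cc_S, Dr_S, D2r_S, S_INR. pose proof (pos_INR n). field. lra.
    now apply radius_ccE. apply radius_scal2. now apply radius_ccD. }
  assert (HG := PS_G r y Hr Hy).
  assert (H2 : PSeries (fun n => 2 * (cc r n * Dr r n)) y = 2 * PSeries (fun n => cc r n * Dr r n) y).
  { unfold PSeries. rewrite <- Series_scal_l. apply Series_ext; intros; ring. }
  rewrite H2 in H0.
  evar (d : R). replace 0 with d.
  apply (is_derive_minus (fun y => exp (r * ln (1 - y)) * G y)).
  apply (is_derive_mult (fun y => exp (r * ln (1 - y))) G).
  apply is_derive_E. lra. apply is_derive_PSeries; now apply radius_ccE. intros; apply Rmult_comm.
  apply (is_derive_pow (fun y => ln (1 - y))). apply is_derive_ln1; lra.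
  unfold d, minus, opp, plus, mult; simpl.
  replace (fun n => cc r n * (Dr r n * (Dr r n * 1) - D2r r n)) with (fun n => cc r n * (Dr r n ^ 2 - D2r r n)) by reflexivity.
  set (P := PSeries (PS_derive (fun n => cc r n * (Dr r n ^ 2 - D2r r n))) y) in *.
  set (E := exp (r * ln (1 - y))) in *.
  apply Rmult_eq_reg_l with (1 - y). 2: lra.
  replace ((1 - y) * (- (r / (1 - y)) * E * G y + E * P + - ((1 + 1) * - / (1 - y) * (ln (1 - y) * 1))))
    with (E * ((1 - y) * P - r * G y) + 2 * ln (1 - y)) by (field; lra).
  rewrite H0. transitivity (2 * (E * PSeries (fun n => cc r n * Dr r n) y + ln (1 - y))). ring.
  rewrite HG. ring.
Qed.

Definition Zf (r q : R) : R := exp (r * ln (1 - q)).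
Definition pnb (r q : R) (n : nat) : R := cc r n * q ^ n * Zf r q.
Definition EE (r q : R) (h : nat -> R) : R := Series (fun n => pnb r q n * h n).
Definition PB (h : nat -> R) : Prop := exists K k, forall n, Rabs (h n) <= K * (1 + INR n) ^ k.

Lemma pnb_pos r q n : 0 < r -> 0 <= q -> 0 <= pnb r q n.
Proof. intros. unfold pnb, Zf. pose proof (cc_pos r n H). pose proof (exp_pos (r * ln (1 - q))).
  pose proof (pow_le q n H0). apply Rmult_le_pos; [apply Rmult_le_pos|]; lra. Qed.

Lemma pow_le_rising x k : 0 <= x -> x ^ k <= rising x k.
Proof. intros Hx. induction k; simpl. lra. pose proof (pos_INR k).
  rewrite Rmult_comm. apply Rmult_le_compat; try lra. apply pow_le; lra. Qed.

Lemma ex_pnb r q h : 0 < r -> 0 <= q < 1 -> PB h -> ex_series (fun n => pnb r q n * h n).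
Proof.
  intros Hr Hq [K [k Hb]].
  apply (exs_le _ (fun n => (K * (1 + / r) ^ k * rising r k * Zf r q) * (cc (r + INR k) n * q ^ n))).
  - intros n.
    rewrite Rabs_mult, (Rabs_pos_eq (pnb r q n)) by (apply pnb_pos; lra).
    pose proof (Hb n) as Hn. pose proof (pos_INR n).
    assert (HK : 0 <= K). { pose proof (Rabs_pos (h n)). 
      assert (0 < (1 + INR n) ^ k) by (apply pow_lt; lra). nra. }
    apply Rle_trans with (pnb r q n * (K * (1 + INR n) ^ k)). apply Rmult_le_compat_l; auto. apply pnb_pos; lra.
    assert (H1 : (1 + INR n) ^ k <= (1 + / r) ^ k * rising (r + INR n) k).
    { apply Rle_trans with (((1 + / r) * (r + INR n)) ^ k). apply pow_incr. split. lra.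
      assert (0 <= INR n / r) by (apply Rdiv_le_0_compat; lra).
      replace ((1 + / r) * (r + INR n)) with (r + INR n + 1 + INR n / r) by (field; lra). lra.
      rewrite Rpow_mult_distr. apply Rmult_le_compat_l. apply pow_le. 
      assert (0 < / r) by (apply Rinv_0_lt_compat; lra). lra. apply pow_le_rising; lra. }
    assert (H2 := cc_shift r n k).
    unfold pnb. 
    apply Rle_trans with (cc r n * q ^ n * Zf r q * (K * ((1 + / r) ^ k * rising (r + INR n) k))).
    apply Rmult_le_compat_l. apply pnb_pos; lra. apply Rmult_le_compat_l; auto.
    replace (cc r n * q ^ n * Zf r q * (K * ((1 + / r) ^ k * rising (r + INR n) k)))
      with (K * (1 + / r) ^ k * Zf r q * q ^ n * (cc r n * rising (r + INR n) k)) by ring.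
    rewrite H2. right; ring.
  - apply exs_scal. apply ex_series_Rabs.
    apply ex_cc. pose proof (pos_INR k); lra. apply Rabs_def1; lra.
Qed.

Lemma PB_const c : PB (fun _ => c).
Proof. exists (Rabs c), 0%nat. intros; simpl; lra. Qed.
Lemma PB_INR : PB (fun n => INR n).
Proof. exists 1, 1%nat. intros; simpl. rewrite Rabs_pos_eq by apply pos_INR. lra. Qed.
Lemma PB_le_pow n k k' : (k <= k')%nat -> (1 + INR n) ^ k <= (1 + INR n) ^ k'.
Proof. intros. apply Rle_pow. pose proof (pos_INR n); lra. auto. Qed.
Lemma PB_plus f g : PB f -> PB g -> PB (fun n => f n + g n).
Proof. intros [K1 [k1 H1]] [K2 [k2 H2]]. exists (Rabs K1 + Rabs K2), (max k1 k2). intros n.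
  pose proof (pos_INR n). 
  assert (A1 := PB_le_pow n k1 (max k1 k2) (Nat.le_max_l _ _)).
  assert (A2 := PB_le_pow n k2 (max k1 k2) (Nat.le_max_r _ _)).
  assert (0 <= (1 + INR n) ^ k1) by (apply pow_le; lra).
  assert (0 <= (1 + INR n) ^ k2) by (apply pow_le; lra).
  eapply Rle_trans. apply Rabs_triang. specialize (H1 n); specialize (H2 n).
  assert (K1 * (1 + INR n) ^ k1 <= Rabs K1 * (1 + INR n) ^ (max k1 k2)).
  { apply Rle_trans with (Rabs K1 * (1 + INR n) ^ k1). apply Rmult_le_compat_r. auto. apply Rle_abs.
    apply Rmult_le_compat_l. apply Rabs_pos. auto. }
  assert (K2 * (1 + INR n) ^ k2 <= Rabs K2 * (1 + INR n) ^ (max k1 k2)).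
  { apply Rle_trans with (Rabs K2 * (1 + INR n) ^ k2). apply Rmult_le_compat_r. auto. apply Rle_abs.
    apply Rmult_le_compat_l. apply Rabs_pos. auto. }
  lra. Qed.
Lemma PB_mult f g : PB f -> PB g -> PB (fun n => f n * g n).
Proof. intros [K1 [k1 H1]] [K2 [k2 H2]]. exists (K1 * K2), (k1 + k2)%nat. intros n.
  rewrite Rabs_mult, pow_add. specialize (H1 n); specialize (H2 n).
  replace (K1 * K2 * ((1 + INR n) ^ k1 * (1 + INR n) ^ k2)) with ((K1 * (1 + INR n) ^ k1) * (K2 * (1 + INR n) ^ k2)) by ring.
  apply Rmult_le_compat; auto; apply Rabs_pos. Qed.
Lemma PB_ext f g : (forall n, f n = g n) -> PB f -> PB g.
Proof. intros E [K [k H]]. exists K, k. intros n. rewrite <- E. auto. Qed.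
Lemma PB_opp f : PB f -> PB (fun n => - f n).
Proof. intros [K [k H]]. exists K, k. intros n. rewrite Rabs_Ropp. auto. Qed.
Lemma PB_minus f g : PB f -> PB g -> PB (fun n => f n - g n).
Proof. intros. apply PB_plus; auto. apply PB_opp; auto. Qed.
Lemma PB_scal c f : PB f -> PB (fun n => c * f n).
Proof. intros. apply PB_mult; auto. apply PB_const. Qed.
Lemma PB_pow f k : PB f -> PB (fun n => f n ^ k).
Proof. intros H. induction k. apply (PB_ext (fun _ => 1)). intros; simpl; auto. apply PB_const.
  apply (PB_ext (fun n => f n * f n ^ k)). intros; simpl; auto. apply PB_mult; auto. Qed.
Lemma PB_div f c : PB f -> PB (fun n => f n / c).
Proof. intros. apply (PB_ext (fun n => / c * f n)). intros; unfold Rdiv; ring. apply PB_scal; auto. Qed.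
Lemma PB_shift f : PB f -> PB (fun n => f (S n)).
Proof. intros [K [k H]]. exists (K * 2 ^ k), k. intros n. 
  eapply Rle_trans. apply H. rewrite S_INR. pose proof (pos_INR n).
  assert (0 <= K). { pose proof (H n). pose proof (Rabs_pos (f n)). assert (0 < (1 + INR n) ^ k) by (apply pow_lt; lra). nra. }
  rewrite Rmult_assoc. apply Rmult_le_compat_l; auto. rewrite <- Rpow_mult_distr. apply pow_incr. lra. Qed.

Ltac pb := repeat first [ apply PB_plus | apply PB_minus | apply PB_mult | apply PB_opp | apply PB_div
   | apply PB_pow | apply PB_INR | apply PB_const ].

Lemma EE_plus r q f g : 0 < r -> 0 <= q < 1 -> PB f -> PB g ->
  EE r q (fun n => f n + g n) = EE r q f + EE r q g.
Proof. intros. unfold EE. rewrite <- Series_plus. apply Series_ext; intros; ring.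
  apply ex_pnb; auto. apply ex_pnb; auto. Qed.
Lemma EE_scal r q c f : EE r q (fun n => c * f n) = c * EE r q f.
Proof. unfold EE. rewrite <- Series_scal_l. apply Series_ext; intros; ring. Qed.
Lemma EE_ext r q f g : (forall n, f n = g n) -> EE r q f = EE r q g.
Proof. intros. unfold EE. apply Series_ext; intros; rewrite H; ring. Qed.

Lemma EE_mass r q : 0 < r -> 0 <= q < 1 -> EE r q (fun _ => 1) = 1.
Proof. intros. transitivity (Zf r q * PSeries (cc r) q).
  unfold EE, pnb, PSeries. rewrite <- Series_scal_l. apply Series_ext; intros; ring.
  apply PS_cc; auto; lra. Qed.

Lemma EE_const r q c : 0 < r -> 0 <= q < 1 -> EE r q (fun _ => c) = c.
Proof. intros. rewrite (EE_ext r q _ (fun _ => c * 1)) by (intros; ring). rewrite EE_scal, EE_mass; auto; ring. Qed.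

Lemma pnb_S r q n : 0 < r -> pnb r q (S n) * INR (S n) = q * (r + INR n) * pnb r q n.
Proof. intros. unfold pnb. rewrite cc_S, S_INR. simpl. pose proof (pos_INR n). field. lra. Qed.

Lemma stein r q h : 0 < r -> 0 <= q < 1 -> PB h ->
  EE r q (fun n => INR n * h n) = q * EE r q (fun n => (r + INR n) * h (S n)).
Proof. intros Hr Hq Hh. unfold EE. rewrite Series_incr_1.
  2:{ apply ex_pnb; auto. pb; auto. }
  simpl. rewrite Rmult_0_l, Rmult_0_r, Rplus_0_l. rewrite <- Series_scal_l. apply Series_ext.
  intros n. rewrite <- Rmult_assoc, pnb_S; auto. ring. Qed.



Definition mu r q k := EE r q (fun n => INR n ^ k).

Lemma EE_poly4 r q c0 c1 c2 c3 c4 : 0 < r -> 0 <= q < 1 ->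
  EE r q (fun n => c0 + c1 * INR n + c2 * INR n ^ 2 + c3 * INR n ^ 3 + c4 * INR n ^ 4)
  = c0 + c1 * mu r q 1 + c2 * mu r q 2 + c3 * mu r q 3 + c4 * mu r q 4.
Proof. intros Hr Hq. unfold mu.
  rewrite !EE_plus; auto; try (pb; fail).
  rewrite EE_const, !EE_scal; auto.
  replace (EE r q (fun n => INR n ^ 1)) with (EE r q INR) by (apply EE_ext; intros; ring). reflexivity. Qed.

Lemma EE_poly r q h c0 c1 c2 c3 c4 : 0 < r -> 0 <= q < 1 ->
  (forall n, h n = c0 + c1 * INR n + c2 * INR n ^ 2 + c3 * INR n ^ 3 + c4 * INR n ^ 4) ->
  EE r q h = c0 + c1 * mu r q 1 + c2 * mu r q 2 + c3 * mu r q 3 + c4 * mu r q 4.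
Proof. intros. rewrite <- EE_poly4; auto. apply EE_ext; auto. Qed.

Definition rr (a : R) := / a.
Definition qq (a l : R) := a * l / (1 + a * l).

Lemma qq_range a l : 0 < a -> 0 < l -> 0 <= qq a l < 1.
Proof. intros. unfold qq. assert (0 < a * l) by nra. split.
  apply Rlt_le, Rdiv_lt_0_compat; lra. apply Rmult_lt_reg_r with (1 + a * l). lra.
  unfold Rdiv. rewrite Rmult_assoc, Rinv_l; lra. Qed.

Lemma rr_pos a : 0 < a -> 0 < rr a.
Proof. intros; unfold rr; apply Rinv_0_lt_compat; auto. Qed.

Lemma moments a l : 0 < a -> 0 < l ->
  mu (rr a) (qq a l) 1 = l /\
  mu (rr a) (qq a l) 2 = (1 + a) * l ^ 2 + l /\
  mu (rr a) (qq a l) 3 = (1 + a) * (1 + 2 * a) * l ^ 3 + 3 * ((1 + a) * l ^ 2) + l /\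
  mu (rr a) (qq a l) 4 = (1 + a) * (1 + 2 * a) * (1 + 3 * a) * l ^ 4
      + 6 * ((1 + a) * (1 + 2 * a) * l ^ 3) + 7 * ((1 + a) * l ^ 2) + l.
Proof.
  intros Ha Hl. set (r := rr a). set (q := qq a l).
  assert (Hr : 0 < r) by apply rr_pos, Ha. assert (Hq : 0 <= q < 1) by (apply qq_range; auto).
  assert (S0 := stein r q (fun n => INR n ^ 0) Hr Hq ltac:(pb)).
  assert (S1 := stein r q (fun n => INR n ^ 1) Hr Hq ltac:(pb)).
  assert (S2 := stein r q (fun n => INR n ^ 2) Hr Hq ltac:(pb)).
  assert (S3 := stein r q (fun n => INR n ^ 3) Hr Hq ltac:(pb)).
  rewrite (EE_poly r q _ 0 1 0 0 0) in S0 by (auto; intros; simpl; ring).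
  rewrite (EE_poly r q _ r 1 0 0 0) in S0 by (auto; intros; rewrite S_INR; simpl; ring).
  rewrite (EE_poly r q _ 0 0 1 0 0) in S1 by (auto; intros; simpl; ring).
  rewrite (EE_poly r q _ r (r+1) 1 0 0) in S1 by (auto; intros; rewrite S_INR; simpl; ring).
  rewrite (EE_poly r q _ 0 0 0 1 0) in S2 by (auto; intros; simpl; ring).
  rewrite (EE_poly r q _ r (2*r+1) (r+2) 1 0) in S2 by (auto; intros; rewrite S_INR; simpl; ring).
  rewrite (EE_poly r q _ 0 0 0 0 1) in S3 by (auto; intros; simpl; ring).
  rewrite (EE_poly r q _ r (3*r+1) (3*r+3) (r+3) 1) in S3 by (auto; intros; rewrite S_INR; simpl; ring).
  set (m1 := mu r q 1) in *. set (m2 := mu r q 2) in *. set (m3 := mu r q 3) in *. set (m4 := mu r q 4) in *.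
  assert (Hq1 : 1 - q = / (1 + a * l)) by (unfold q, qq; field; nra).
  assert (Hrq : q * r = l * (1 - q)) by (unfold q, r, qq, rr; field; nra).
  assert (Hqr : q = a * l * (1 - q)) by (unfold q, qq; field; nra).
  assert (Hr' : r * a = 1) by (unfold r, rr; field; lra).
  assert (Hnz : 1 - q <> 0) by (rewrite Hq1; apply Rinv_neq_0_compat; nra).
  assert (EE' : m1 = l).
  { apply Rmult_eq_reg_l with (1 - q); auto. nra. }
  assert (E2' : m2 = (1 + a) * l ^ 2 + l).
  { apply Rmult_eq_reg_l with (1 - q); auto. 
    replace ((1 - q) * m2) with (q * (r + (r + 1) * m1)) by nra.
    rewrite EE'; rewrite Hqr at 1. replace (a * l * (1 - q) * (r + (r + 1) * l)) with ((1-q) * (l * (r * a) + (r * a + a) * l * l)) by ring.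
    rewrite Hr'. ring. }
  assert (E3' : m3 = (1 + a) * (1 + 2 * a) * l ^ 3 + 3 * ((1 + a) * l ^ 2) + l).
  { apply Rmult_eq_reg_l with (1 - q); auto. 
    replace ((1 - q) * m3) with (q * (r + (2 * r + 1) * m1 + (r + 2) * m2)) by nra.
    rewrite EE', E2'; rewrite Hqr at 1.
    replace (a * l * (1 - q) * (r + (2 * r + 1) * l + (r + 2) * ((1 + a) * l ^ 2 + l)))
     with ((1-q) * (l * (r * a) + (2 * (r * a) + a) * l * l + (r * a + 2 * a) * l * ((1 + a) * l ^ 2 + l))) by ring.
    rewrite Hr'. ring. }
  assert (E4' : m4 = (1 + a) * (1 + 2 * a) * (1 + 3 * a) * l ^ 4
      + 6 * ((1 + a) * (1 + 2 * a) * l ^ 3) + 7 * ((1 + a) * l ^ 2) + l).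
  { apply Rmult_eq_reg_l with (1 - q); auto. 
    replace ((1 - q) * m4) with (q * (r + (3 * r + 1) * m1 + (3 * r + 3) * m2 + (r + 3) * m3)) by nra.
    rewrite EE', E2', E3'; rewrite Hqr at 1.
    replace (a * l * (1 - q) * (r + (3 * r + 1) * l + (3 * r + 3) * ((1 + a) * l ^ 2 + l) +
      (r + 3) * ((1 + a) * (1 + 2 * a) * l ^ 3 + 3 * ((1 + a) * l ^ 2) + l)))
     with ((1-q) * (l * (r * a) + (3 * (r * a) + a) * l * l + (3 * (r * a) + 3 * a) * l * ((1 + a) * l ^ 2 + l) +
      (r * a + 3 * a) * l * ((1 + a) * (1 + 2 * a) * l ^ 3 + 3 * ((1 + a) * l ^ 2) + l))) by ring.
    rewrite Hr'. ring. }
  auto.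
Qed.

Lemma sumT_sum_f f n : sumT (S n) f = sum_f_R0 f n.
Proof. induction n. simpl. ring. change (sumT (S (S n)) f) with (sumT (S n) f + f (S n)). rewrite IHn. reflexivity. Qed.

Lemma lim_sumT (f : nat -> R) : ex_series f -> is_lim_seq (fun J => sumT J f) (Series f).
Proof. intros H. apply Series_correct in H. apply is_series_Reals in H.
  apply is_lim_seq_Reals in H. apply is_lim_seq_incr_1.
  apply is_lim_seq_ext with (sum_f_R0 f). intros; now rewrite sumT_sum_f. auto. Qed.

Lemma tail_eq (p : nat -> R) m : ex_series p -> Series (fun n => p (n + m)%nat) = Series p - sumT m p.
Proof. intros H. destruct m. simpl. rewrite Rminus_0_r. apply Series_ext. intros; now rewrite Nat.add_0_r.
  rewrite (Series_incr_n p (S m)); auto; try lia. simpl pred. rewrite <- sumT_sum_f.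
  replace (Series (fun n => p (n + S m)%nat)) with (Series (fun k => p (S m + k)%nat)). ring.
  apply Series_ext; intros; f_equal; lia. Qed.

Lemma sumT_ext f g n : (forall k, (k < n)%nat -> f k = g k) -> sumT n f = sumT n g.
Proof. induction n; intros H; simpl. auto. rewrite IHn, H; auto. Qed.

Lemma sumT_nonneg d J : (forall j, 0 <= d j) -> 0 <= sumT J d.
Proof. intros H; induction J; simpl. lra. pose proof (H J); lra. Qed.

Lemma tail_swap (p d : nat -> R) K :
  (forall n, 0 <= p n) -> (forall j, 0 <= d j) -> (forall J, sumT J d <= K * INR J) ->
  ex_series p -> ex_series (fun n => p n * INR n) -> ex_series (fun n => p n * sumT n d) ->
  Series (fun j => d j * Series (fun n => p (n + S j)%nat)) = Series (fun n => p n * sumT n d).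
Proof.
  intros Hp Hd HK Ep Epn Epd.
  set (Sp := Series p). set (E := Series (fun n => p n * sumT n d)).
  assert (HA : forall J, sumT J (fun j => d j * Series (fun n => p (n + S j)%nat))
     = sumT J (fun n => p n * sumT n d) + sumT J d * (Sp - sumT J p)).
  { induction J. simpl. ring. simpl. rewrite IHJ. rewrite tail_eq; auto. simpl. fold Sp. ring. }
  apply is_series_unique.
  apply is_series_Reals. apply is_lim_seq_Reals.
  apply is_lim_seq_ext with (fun J => sumT (S J) (fun j => d j * Series (fun n => p (n + S j)%nat))).
  intros; apply sumT_sum_f.
  apply -> (is_lim_seq_incr_1 (fun J => sumT J (fun j => d j * Series (fun n => p (n + S j)%nat)))).
  apply is_lim_seq_ext with (fun J => sumT J (fun n => p n * sumT n d) + sumT J d * (Sp - sumT J p)).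
  intros; now rewrite HA.
  replace E with (E + 0) by ring. apply is_lim_seq_plus'. now apply lim_sumT.
  set (Snp := Series (fun n => p n * INR n)).
  apply is_lim_seq_le_le with (fun _ => 0) (fun J => Rabs K * (Snp - sumT J (fun n => p n * INR n))).
  - intros J. 
    assert (HT : Sp - sumT J p = Series (fun n => p (n + J)%nat)) by (rewrite tail_eq; auto).
    assert (HT2 : Snp - sumT J (fun n => p n * INR n) = Series (fun n => p (n + J)%nat * INR (n + J))).
    { unfold Snp. rewrite <- (tail_eq (fun n => p n * INR n)); auto. }
    assert (ET : ex_series (fun n => p (n + J)%nat)).
    { apply (ex_series_ext (fun n => p (J + n)%nat)). intros; f_equal; lia. now apply ex_series_incr_n. }
    assert (ET2 : ex_series (fun n => p (n + J)%nat * INR (n + J))).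
    { apply (ex_series_ext (fun n => (fun k => p k * INR k) (J + n)%nat)). intros; simpl; f_equal; f_equal; lia.
      now apply (ex_series_incr_n (fun k => p k * INR k)). }
    assert (T0 : 0 <= Series (fun n => p (n + J)%nat)) by (apply Series_nonneg; auto).
    assert (D0 : 0 <= sumT J d) by (apply sumT_nonneg; auto).
    rewrite HT, HT2. split. apply Rmult_le_pos; auto.
    apply Rle_trans with (K * INR J * Series (fun n => p (n + J)%nat)). apply Rmult_le_compat_r; auto.
    assert (0 <= K * INR J) by (specialize (HK J); lra).
    apply Rle_trans with (Rabs K * (INR J * Series (fun n => p (n + J)%nat))).
    rewrite <- Rmult_assoc. apply Rmult_le_compat_r; auto.
    apply Rle_trans with (Rabs (K * INR J)). apply Rle_abs. rewrite Rabs_mult, (Rabs_pos_eq (INR J)) by apply pos_INR. lra.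
    apply Rmult_le_compat_l. apply Rabs_pos. rewrite <- Series_scal_l. apply Series_le; auto.
    intros n. pose proof (Hp (n + J)%nat). rewrite plus_INR. pose proof (pos_INR n). pose proof (pos_INR J). split. 
    apply Rmult_le_pos; lra. nra.
  - apply is_lim_seq_const.
  - replace 0 with (Rabs K * (Snp - Snp)) by ring. apply is_lim_seq_mult'. apply is_lim_seq_const.
    apply is_lim_seq_minus'. apply is_lim_seq_const. now apply lim_sumT.
Qed.



Fixpoint lcf (L : list (R * (nat -> R))) (n : nat) : R :=
  match L with nil => 0 | (k, f) :: t => k * f n + lcf t n end.
Fixpoint lcv r q (L : list (R * (nat -> R))) : R :=
  match L with nil => 0 | (k, f) :: t => k * EE r q f + lcv r q t end.
Fixpoint allPB (L : list (R * (nat -> R))) : Prop :=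
  match L with nil => True | (k, f) :: t => PB f /\ allPB t end.

Lemma PB_lc L : allPB L -> PB (lcf L).
Proof. induction L as [|kf t IH]; intros H.
  apply (PB_ext (fun _ => 0)). reflexivity. apply PB_const.
  destruct kf as [k f]. destruct H as [H1 H2]. apply (PB_ext (fun n => k * f n + lcf t n)). reflexivity.
  apply PB_plus. apply PB_scal; auto. auto. Qed.

Lemma EE_lc r q L : 0 < r -> 0 <= q < 1 -> allPB L -> EE r q (lcf L) = lcv r q L.
Proof. intros Hr Hq. induction L as [|kf t IH]; intros H.
  simpl. transitivity (EE r q (fun _ => 0)). reflexivity. apply EE_const; auto.
  destruct kf as [k f]. destruct H as [H1 H2]. 
  rewrite (EE_ext r q _ (fun n => k * f n + lcf t n)) by reflexivity.
  rewrite EE_plus; auto. rewrite EE_scal, IH; auto. apply PB_scal; auto. apply PB_lc; auto. Qed.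

Lemma PB_Dr r : 0 < r -> PB (Dr r).
Proof. intros Hr. exists (/ r), 1%nat. intros n. destruct (Dr_bound r n Hr). rewrite Rabs_pos_eq by lra.
  simpl. rewrite Rmult_1_r. unfold Rdiv in H0. rewrite Rmult_comm. 
  assert (0 < / r) by (apply Rinv_0_lt_compat; lra). nra. Qed.
Lemma PB_D2r r : 0 < r -> PB (D2r r).
Proof. intros Hr. exists (/ r ^ 2), 1%nat. intros n. destruct (D2r_bound r n Hr). rewrite Rabs_pos_eq by lra.
  rewrite pow_1. unfold Rdiv in H0.
  assert (0 < / r ^ 2) by (apply Rinv_0_lt_compat, pow_lt; lra). nra. Qed.

Definition uf a l n := (INR n - l) / (1 + a * l).
Definition vf a l n := (INR n * (1 + a * l) ^ 2 - a ^ 2 * INR n * l ^ 2 - a * l ^ 2) / (1 + a * l) ^ 2.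
Definition gf a l n := uf a l n ^ 2 - vf a l n.
Definition saf a l n := / a ^ 2 * (ln (1 + a * l) - Dr (rr a) n) + (INR n - l) / (a * (1 + a * l)).


Lemma per_coord a l : 0 < a -> 0 < l ->
  let E := EE (rr a) (qq a l) in
  E (uf a l) = 0 /\
  E (fun n => uf a l n ^ 2) = l * (1 + a * l) / (1 + a * l) ^ 2 /\
  E (gf a l) = 0 /\
  E (fun n => uf a l n * gf a l n) = 0 /\
  E (fun n => gf a l n ^ 2) = 2 * l ^ 2 * (1 + a) / (1 + a * l) ^ 2.
Proof.
  intros Ha Hl E. unfold E.
  assert (Hr : 0 < rr a) by (apply rr_pos; auto). assert (Hq := qq_range a l Ha Hl).
  assert (Hc : 0 < 1 + a * l) by nra.
  destruct (moments a l Ha Hl) as [M1 [M2 [M3 M4]]].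
  set (c := 1 + a * l) in *.
  set (be := - (1 + 2 * l + 2 * a * l)). set (ga := l ^ 2 * (1 + a)).
  assert (Hg : forall n, gf a l n = (INR n ^ 2 + be * INR n + ga) / c ^ 2).
  { intros n. unfold gf, uf, vf, be, ga. fold c. unfold c. field; unfold c in *; lra. }
  repeat split.
  - rewrite (EE_poly _ _ _ (- l / c) (1 / c) 0 0 0); auto. rewrite M1. field; unfold c in *; lra.
    intros n; unfold uf; fold c. field; unfold c in *; lra.
  - rewrite (EE_poly _ _ _ (l ^ 2 / c ^ 2) (- 2 * l / c ^ 2) (1 / c ^ 2) 0 0); auto. rewrite M1, M2. unfold c. field; unfold c in *; lra.
    intros n; unfold uf; fold c. field; unfold c in *; lra.
  - rewrite (EE_poly _ _ _ (ga / c ^ 2) (be / c ^ 2) (1 / c ^ 2) 0 0); auto. rewrite M1, M2. unfold c, be, ga. field; unfold c in *; lra.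
    intros n; rewrite Hg. field; unfold c in *; lra.
  - rewrite (EE_poly _ _ _ (- l * ga / c ^ 3) ((ga - l * be) / c ^ 3) ((be - l) / c ^ 3) (1 / c ^ 3) 0); auto.
    rewrite M1, M2, M3. unfold c, be, ga. field; unfold c in *; lra.
    intros n; rewrite Hg; unfold uf; fold c. field; unfold c in *; lra.
  - rewrite (EE_poly _ _ _ (ga ^ 2 / c ^ 4) (2 * be * ga / c ^ 4) ((be ^ 2 + 2 * ga) / c ^ 4) (2 * be / c ^ 4) (1 / c ^ 4)); auto.
    rewrite M1, M2, M3, M4. unfold c, be, ga. field; unfold c in *; lra.
    intros n; rewrite Hg. field; unfold c in *; lra.
Qed.



Lemma one_minus_qq a l : 0 < a -> 0 < l -> 1 - qq a l = / (1 + a * l).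
Proof. intros. unfold qq. field. nra. Qed.

Lemma ln_1mq a l : 0 < a -> 0 < l -> ln (1 - qq a l) = - ln (1 + a * l).
Proof. intros. rewrite one_minus_qq; auto. rewrite ln_Rinv. auto. nra. Qed.

Lemma EE_PS r q b : EE r q b = Zf r q * PSeries (fun n => cc r n * b n) q.
Proof. unfold EE, pnb, PSeries. rewrite <- Series_scal_l. apply Series_ext; intros; ring. Qed.

Lemma D_facts a l : 0 < a -> 0 < l ->
  let r := rr a in let q := qq a l in
  EE r q (Dr r) = ln (1 + a * l) /\
  EE r q (fun n => Dr r n ^ 2 - D2r r n) = ln (1 + a * l) ^ 2 /\
  EE r q (fun n => INR n * Dr r n) = l * ln (1 + a * l) + a * l /\
  EE r q (fun n => (INR n ^ 2 - (1 + 2 * l + 2 * a * l) * INR n + l ^ 2 * (1 + a)) * Dr r n) = - a ^ 2 * l ^ 2.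
Proof.
  intros Ha Hl r q.
  assert (Hr : 0 < r) by (apply rr_pos; auto). assert (Hq := qq_range a l Ha Hl). fold q in Hq.
  assert (Hc : 0 < 1 + a * l) by nra.
  assert (Hq' : -1 < q < 1) by lra.
  assert (HL := ln_1mq a l Ha Hl). fold q in HL.
  destruct (moments a l Ha Hl) as [M1 _]. fold r q in M1.
  assert (ED : EE r q (Dr r) = ln (1 + a * l)).
  { rewrite (EE_PS r q (Dr r)). unfold Zf. rewrite PS_G; auto. lra. }
  assert (EDD : EE r q (fun n => Dr r n ^ 2 - D2r r n) = ln (1 + a * l) ^ 2).
  { rewrite (EE_PS r q (fun n => Dr r n ^ 2 - D2r r n)). unfold Zf. rewrite PS_E; auto. rewrite HL. ring. }
  assert (PD := PB_Dr r Hr).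
  assert (Hqr : q * r = l * (1 - q)) by (unfold q, r, qq, rr; field; nra).
  assert (Hqa : q = a * l * (1 - q)) by (unfold q, qq; field; nra).
  assert (Hnz : 1 - q <> 0) by lra.
  assert (EnD : EE r q (fun n => INR n * Dr r n) = l * ln (1 + a * l) + a * l).
  { assert (St := stein r q (Dr r) Hr Hq PD).
    rewrite (EE_ext r q (fun n => (r + INR n) * Dr r (S n)) (fun n => r * Dr r n + INR n * Dr r n + 1)) in St.
    2:{ intros n. rewrite Dr_S. pose proof (pos_INR n). field. lra. }
    rewrite !EE_plus, EE_scal, EE_const, ED in St; auto; try (pb; auto; fail).
    apply Rmult_eq_reg_l with (1 - q); auto.
    replace ((1 - q) * EE r q (fun n => INR n * Dr r n)) with (q * r * ln (1 + a * l) + q) by nra.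
    rewrite Hqr. rewrite Hqa at 2. ring. }
  repeat split; auto.
  set (c := 1 + a * l).
  set (P := fun n : nat => c * INR n - c * (c + l)).
  assert (St := stein r q (fun n => Dr r n * P n) Hr Hq ltac:(unfold P; pb; auto)). cbv beta in St.
  rewrite (EE_ext r q (fun n => (r + INR n) * (Dr r (S n) * P (S n)))
                 (fun n => (r + INR n) * Dr r n * P (S n) + P (S n))) in St.
  2:{ intros n. rewrite Dr_S. pose proof (pos_INR n). field. lra. }
  assert (PP : PB (fun n => P (S n))). { unfold P. apply (PB_ext (fun n => c * INR n + c - c * (c + l))).
    intros; rewrite S_INR; ring. pb. }
  assert (PQ : PB (fun n => (r + INR n) * Dr r n * P (S n))). { apply PB_mult; [apply PB_mult; [pb | auto] | exact PP]. }
  rewrite EE_plus in St; auto.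
  assert (EP : EE r q (fun n => P (S n)) = - c * a * l).
  { rewrite (EE_poly r q _ (c - c * (c + l)) c 0 0 0); auto. fold (mu r q 1) in *. rewrite M1. unfold c. ring.
    intros n. unfold P. rewrite S_INR. ring. }
  rewrite EP in St.
  rewrite (EE_ext r q _ (fun n => INR n * (Dr r n * P n) + (- q) * ((r + INR n) * Dr r n * P (S n)))).
  2:{ intros n. unfold P. rewrite S_INR. unfold q, r, qq, rr. unfold c. field. split; lra. }
  rewrite EE_plus, EE_scal, St; auto. 2: unfold P; pb; auto. 2: apply PB_scal; auto.
  unfold q, c, qq. field. lra.
Qed.



Lemma sa_facts a l : 0 < a -> 0 < l ->
  let r := rr a in let q := qq a l in
  EE r q (saf a l) = 0 /\
  EE r q (fun n => gf a l n * saf a l n) = l ^ 2 / (1 + a * l) ^ 2 /\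
  EE r q (fun n => saf a l n ^ 2) =
    / a ^ 4 * (Series (fun j => / (/ a + INR j) ^ 2 * Series (fun n => pnb r q (n + S j)%nat))
               - a * l / (l + / a)).
Proof.
  intros Ha Hl r q.
  assert (Hr : 0 < r) by (apply rr_pos; auto). assert (Hq := qq_range a l Ha Hl). fold q in Hq.
  assert (Hc : 0 < 1 + a * l) by nra.
  destruct (moments a l Ha Hl) as [M1 [M2 [M3 M4]]]. fold r q in M1, M2, M3, M4.
  destruct (D_facts a l Ha Hl) as [ED [EDD [EnD EGD]]]. fold r q in ED, EDD, EnD, EGD.
  assert (PD := PB_Dr r Hr). assert (PD2 := PB_D2r r Hr).
  set (c := 1 + a * l) in *. set (L := ln c) in *.
  repeat split.
  - rewrite (EE_ext r q _ (lcf [(L / a ^ 2 - l / (a * c), fun _ => 1); (- / a ^ 2, Dr r); (1 / (a * c), INR)])).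
    2:{ intros n. unfold saf. simpl. fold r c L. field. unfold c in *; lra. }
    rewrite EE_lc; auto. 2:{ simpl. repeat split; auto; pb. }
    simpl. rewrite EE_const, ED; auto. rewrite (EE_poly r q INR 0 1 0 0 0); auto. 2: intros; ring. rewrite M1. field. unfold c in *; lra.
  - set (Gf := fun n => INR n ^ 2 - (1 + 2 * l + 2 * a * l) * INR n + l ^ 2 * (1 + a)).
    rewrite (EE_ext r q _ (lcf [(L / (a ^ 2 * c ^ 2), Gf); (- 1 / (a ^ 2 * c ^ 2), fun n => Gf n * Dr r n);
                                (1 / (a * c ^ 3), fun n => (INR n - l) * Gf n)])).
    2:{ intros n. unfold saf, gf, uf, vf, Gf. simpl. fold r c L. unfold c in *. field. lra. }
    rewrite EE_lc; auto. 2:{ simpl. unfold Gf. repeat split; auto; pb; auto. }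
    simpl. unfold Gf at 2. rewrite EGD.
    rewrite (EE_poly r q Gf (l ^ 2 * (1 + a)) (- (1 + 2 * l + 2 * a * l)) 1 0 0); auto.
    2:{ intros; unfold Gf; ring. }
    rewrite (EE_poly r q _ (- l * (l ^ 2 * (1 + a))) (l ^ 2 * (1 + a) + l * (1 + 2 * l + 2 * a * l))
                (- (1 + 2 * l + 2 * a * l) - l) 1 0); auto.
    2:{ intros; unfold Gf; ring. }
    rewrite M1, M2, M3. unfold c in *. field. lra.
  - assert (HT : Series (fun j => / (/ a + INR j) ^ 2 * Series (fun n => pnb r q (n + S j)%nat))
                 = EE r q (D2r r)).
    { unfold EE. apply (tail_swap (pnb r q) (fun j => / (r + INR j) ^ 2) (/ r ^ 2)).
      intros; apply pnb_pos; lra. intros j. apply Rlt_le, Rinv_0_lt_compat, pow_lt. pose proof (pos_INR j); lra.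
      intros J. destruct (D2r_bound r J Hr). unfold D2r in H0. unfold Rdiv in H0. rewrite Rmult_comm; exact H0.
      apply (exs_ext (fun n => pnb r q n * 1)). intros; ring. apply ex_pnb; auto. pb.
      apply ex_pnb; auto. pb. apply ex_pnb; auto. }
    rewrite HT.
    rewrite (EE_ext r q _ (lcf [(L ^ 2 / a ^ 4, fun _ => 1); (- 2 * L / a ^ 4, Dr r);
        (1 / a ^ 4, fun n => Dr r n ^ 2 - D2r r n); (1 / a ^ 4, D2r r);
        (2 * L / (a ^ 3 * c), fun n => INR n - l); (- 2 / (a ^ 3 * c), fun n => INR n * Dr r n);
        (2 * l / (a ^ 3 * c), Dr r); (1 / (a ^ 2 * c ^ 2), fun n => (INR n - l) ^ 2)])).
    2:{ intros n. unfold saf. simpl. fold r c L. field. unfold c in *; lra. }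
    rewrite EE_lc; auto. 2:{ simpl. repeat split; auto; pb; auto. }
    cbn [lcv]. rewrite EE_const, ED, EDD, EnD; auto.
    rewrite (EE_poly r q (fun n => INR n - l) (- l) 1 0 0 0); auto. 2: intros; ring.
    rewrite (EE_poly r q (fun n => (INR n - l) ^ 2) (l ^ 2) (- 2 * l) 1 0 0); auto. 2: intros; ring.
    rewrite M1, M2. unfold c in *. field. split; try lra.
Qed.

Fixpoint V1r (m k : nat) (e : nat -> nat) : R :=
  match k with O => 1 | S j => V1r m j e * (if (m <=? j)%nat then 1 + INR (e j) else 1) end.

Lemma V1r_ge1 m k e : 1 <= V1r m k e.
Proof. induction k; simpl. lra. destruct (m <=? k)%nat. pose proof (pos_INR (e k)). nra. lra. Qed.

Lemma V1r_small m k e : (k <= m)%nat -> V1r m k e = 1.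
Proof. induction k; simpl; intros. auto. rewrite IHk by lia. 
  destruct (Nat.leb_spec m k). lia. ring. Qed.

Lemma V1r_upd m k e n : (m < k)%nat -> V1r m k (upd e m n) = (1 + INR n) * V1r (S m) k e.
Proof. induction k; intros H. lia.
  change (V1r m (S k) (upd e m n)) with (V1r m k (upd e m n) * (if (m <=? k)%nat then 1 + INR (upd e m n k) else 1)).
  change (V1r (S m) (S k) e) with (V1r (S m) k e * (if (S m <=? k)%nat then 1 + INR (e k) else 1)).
  destruct (Nat.eq_dec k m). subst. rewrite V1r_small by lia. rewrite V1r_small by lia.
  rewrite Nat.leb_refl. destruct (Nat.leb_spec (S m) m). lia. unfold upd. rewrite Nat.eqb_refl. ring.
  rewrite IHk by lia. destruct (Nat.leb_spec m k); [|lia]. destruct (Nat.leb_spec (S m) k); [|lia].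
  unfold upd. destruct (Nat.eqb_spec k m). lia. ring. Qed.

Lemma V1r_S0 m e : V1r 0 (S m) e = V1r 0 m e * (1 + INR (e m)).
Proof. reflexivity. Qed.


Fixpoint Good (pm : nat -> nat -> R) (k : nat) (f : (nat -> nat) -> R) : Prop :=
  match k with O => True
  | S m => Good pm m f /\ forall e, ex_series (fun n => pm m n * Eiter pm m f (upd e m n)) end.

Fixpoint Mp (pm : nat -> nat -> R) (d m : nat) : R :=
  match m with O => 1 | S j => Mp pm d j * Series (fun n => pm j n * (1 + INR n) ^ d) end.

Definition PMok (pm : nat -> nat -> R) : Prop :=
  (forall t n, 0 <= pm t n) /\ (forall t d, ex_series (fun n => pm t n * (1 + INR n) ^ d)).

Lemma Mp_nonneg pm d m : PMok pm -> 0 <= Mp pm d m.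
Proof. intros [H1 H2]. induction m; simpl. lra. apply Rmult_le_pos; auto.
  apply Series_nonneg; auto. intros n. apply Rmult_le_pos; auto. apply pow_le. pose proof (pos_INR n); lra. Qed.

Lemma dom_good pm d kk f K : PMok pm -> 0 <= K -> (forall e, Rabs (f e) <= K * V1r 0 kk e ^ d) ->
  forall m, (m <= kk)%nat -> Good pm m f /\ forall e, Rabs (Eiter pm m f e) <= K * Mp pm d m * V1r m kk e ^ d.
Proof.
  intros Hpm HK Hf. pose proof Hpm as [Hp Hs]. induction m; intros Hm.
  - split. exact I. intros e. simpl. rewrite Rmult_1_r. auto.
  - destruct IHm as [G1 B1]. lia.
    assert (HM := Mp_nonneg pm d m Hpm).
    assert (Hb : forall e n, Rabs (pm m n * Eiter pm m f (upd e m n)) <=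
                 (K * Mp pm d m * V1r (S m) kk e ^ d) * (pm m n * (1 + INR n) ^ d)).
    { intros e n. rewrite Rabs_mult, (Rabs_pos_eq (pm m n)) by auto.
      apply Rle_trans with (pm m n * (K * Mp pm d m * V1r m kk (upd e m n) ^ d)).
      apply Rmult_le_compat_l; auto. rewrite V1r_upd by lia. rewrite Rpow_mult_distr. right; ring. }
    assert (HexA : forall e, ex_series (fun n => Rabs (pm m n * Eiter pm m f (upd e m n)))).
    { intros e. apply (exs_le _ (fun n => (K * Mp pm d m * V1r (S m) kk e ^ d) * (pm m n * (1 + INR n) ^ d))).
      intros n. rewrite Rabs_Rabsolu. apply Hb. apply exs_scal. auto. }
    split. split; auto. intros e; apply ex_series_Rabs; auto.
    intros e. simpl Eiter. 
    eapply Rle_trans. apply Series_Rabs. auto.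
    eapply Rle_trans. apply Series_le. 2: apply (exs_scal (K * Mp pm d m * V1r (S m) kk e ^ d)); apply Hs.
    intros n. split. apply Rabs_pos. apply Hb.
    rewrite Series_scal_l. simpl Mp. right; ring.
Qed.

Lemma Eiter_plus pm m f g : Good pm m f -> Good pm m g ->
  forall e, Eiter pm m (fun e => f e + g e) e = Eiter pm m f e + Eiter pm m g e.
Proof. induction m; intros Hf Hg e. reflexivity.
  destruct Hf as [Hf1 Hf2], Hg as [Hg1 Hg2]. simpl.
  rewrite <- Series_plus; auto. apply Series_ext. intros n. rewrite IHm; auto. ring. Qed.

Lemma Eiter_scal pm m c f e : Eiter pm m (fun e => c * f e) e = c * Eiter pm m f e.
Proof. revert e; induction m; intros e. reflexivity. simpl.
  rewrite <- Series_scal_l. apply Series_ext. intros n. rewrite IHm. ring. Qed.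

Lemma Eiter_ext_loc pm m f g e : (forall e', (forall j, (m <= j)%nat -> e' j = e j) -> f e' = g e') ->
  Eiter pm m f e = Eiter pm m g e.
Proof. revert e; induction m; intros e H. simpl. apply H. auto.
  simpl. apply Series_ext. intros n. f_equal. apply IHm. intros e' He'. apply H.
  intros j Hj. rewrite He' by lia. unfold upd. destruct (Nat.eqb_spec j m). lia. auto. Qed.

Lemma Eiter_dep pm (P : nat -> Prop) m f : (forall e e', (forall j, P j -> e j = e' j) -> f e = f e') ->
  forall e e', (forall j, P j -> (m <= j)%nat -> e j = e' j) -> Eiter pm m f e = Eiter pm m f e'.
Proof. intros Hf. induction m; intros e e' H. simpl. apply Hf. intros; apply H; auto; lia.
  simpl. apply Series_ext. intros n. f_equal. apply IHm. intros j Pj Hj. unfold upd.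
  destruct (Nat.eqb_spec j m). auto. apply H; auto. lia. Qed.

Lemma Eiter_indep pm m f : (forall e e', (forall j, (j < m)%nat -> e j = e' j) -> f e = f e') ->
  forall e e', Eiter pm m f e = Eiter pm m f e'.
Proof. intros Hf e e'. apply (Eiter_dep pm (fun j => (j < m)%nat)); auto. intros; lia. Qed.

Lemma Eiter_pull pm m (h f : (nat -> nat) -> R) :
  (forall e j n, (j < m)%nat -> h (upd e j n) = h e) ->
  forall e, Eiter pm m (fun e => h e * f e) e = h e * Eiter pm m f e.
Proof. induction m; intros Hh e. reflexivity. simpl.
  rewrite <- Series_scal_l. apply Series_ext. intros n. rewrite IHm.
  rewrite Hh by lia. ring. intros; apply Hh; lia. Qed.

Definition Dm (m : nat) (A : (nat -> nat) -> R) : Prop :=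
  exists K d, 0 <= K /\ forall e, Rabs (A e) <= K * V1r 0 m e ^ d.
Definition Dep (m : nat) (A : (nat -> nat) -> R) : Prop :=
  forall e e', (forall j, (j < m)%nat -> e j = e' j) -> A e = A e'.

Lemma pow_V_mono (V : R) d d' : 1 <= V -> (d <= d')%nat -> V ^ d <= V ^ d'.
Proof. intros. apply Rle_pow; auto. Qed.

Lemma Dm_plus m f g : Dm m f -> Dm m g -> Dm m (fun e => f e + g e).
Proof. intros [K1 [d1 [H1 B1]]] [K2 [d2 [H2 B2]]]. exists (K1 + K2), (d1 + d2)%nat. split. lra.
  intros e. pose proof (V1r_ge1 0 m e) as HV.
  assert (A1 := pow_V_mono _ d1 (d1 + d2) HV ltac:(lia)).
  assert (A2 := pow_V_mono _ d2 (d1 + d2) HV ltac:(lia)).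
  eapply Rle_trans. apply Rabs_triang. specialize (B1 e); specialize (B2 e).
  assert (K1 * V1r 0 m e ^ d1 <= K1 * V1r 0 m e ^ (d1 + d2)) by (apply Rmult_le_compat_l; auto).
  assert (K2 * V1r 0 m e ^ d2 <= K2 * V1r 0 m e ^ (d1 + d2)) by (apply Rmult_le_compat_l; auto).
  lra. Qed.

Lemma Dm_zero m : Dm m (fun _ => 0).
Proof. exists 0, 0%nat. split. lra. intros; rewrite Rabs_R0; simpl; lra. Qed.

Lemma Dm_term m A phi : Dm m A -> PB phi -> Dm (S m) (fun e => A e * phi (e m)).
Proof. intros [K [d [HK B]]] [K' [d' B']]. 
  assert (HK' : 0 <= K'). { pose proof (B' O). pose proof (Rabs_pos (phi O)). simpl in H. 
    rewrite Rplus_0_r in H. rewrite pow1 in H. lra. }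
  exists (K * K'), (d + d')%nat. split. apply Rmult_le_pos; auto.
  intros e. rewrite V1r_S0. rewrite Rabs_mult.
  pose proof (V1r_ge1 0 m e) as HV. pose proof (pos_INR (e m)).
  apply Rle_trans with ((K * V1r 0 m e ^ d) * (K' * (1 + INR (e m)) ^ d')).
  apply Rmult_le_compat; auto; apply Rabs_pos.
  replace (K * V1r 0 m e ^ d * (K' * (1 + INR (e m)) ^ d')) with ((K * K') * (V1r 0 m e ^ d * (1 + INR (e m)) ^ d')) by ring.
  apply Rmult_le_compat_l. apply Rmult_le_pos; auto.
  rewrite Rpow_mult_distr. apply Rmult_le_compat. apply pow_le; lra. apply pow_le; lra.
  apply pow_V_mono; auto; lia. apply pow_V_mono; [lra|lia]. Qed.

Lemma Good_of_Dm pm m f : PMok pm -> Dm (S m) f -> Good pm m f.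
Proof. intros Hpm [K [d [HK B]]]. apply (dom_good pm d (S m) f K Hpm HK B m). lia. Qed.

Fixpoint pl (L : list (((nat -> nat) -> R) * (nat -> R))) (e : nat -> nat) (m : nat) : R :=
  match L with nil => 0 | (A, phi) :: t => A e * phi (e m) + pl t e m end.
Fixpoint plI pm m (L : list (((nat -> nat) -> R) * (nat -> R))) (n : nat) : R :=
  match L with nil => 0 | (A, phi) :: t => phi n * Eiter pm m A (fun _ => O) + plI pm m t n end.
Fixpoint plv pm m (L : list (((nat -> nat) -> R) * (nat -> R))) : R :=
  match L with nil => 0 | (A, phi) :: t => Eiter pm m A (fun _ => O) * Series (fun n => pm m n * phi n) + plv pm m t end.
Fixpoint allok m (L : list (((nat -> nat) -> R) * (nat -> R))) : Prop :=
  match L with nil => True | (A, phi) :: t => Dm m A /\ Dep m A /\ PB phi /\ allok m t end.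

Lemma Dm_pl m L : allok m L -> Dm (S m) (fun e => pl L e m).
Proof. induction L as [|Ap t IH]; intros H. apply Dm_zero. destruct Ap as [A phi]. destruct H as [H1 [H2 [H3 H4]]].
  apply (Dm_plus _ (fun e => A e * phi (e m)) (fun e => pl t e m)). apply Dm_term; auto. auto. Qed.

Lemma peel_inner pm m L env n : PMok pm -> allok m L ->
  Eiter pm m (fun e => pl L e m) (upd env m n) = plI pm m L n.
Proof. intros Hpm. induction L as [|Ap t IH]; intros H.
  simpl. transitivity (Eiter pm m (fun e => 0 * 0) (upd env m n)). apply Eiter_ext_loc; intros; simpl; ring.
  rewrite (Eiter_scal pm m 0 (fun _ => 0)). ring.
  destruct Ap as [A phi]. destruct H as [H1 [H2 [H3 H4]]]. simpl.
  rewrite (Eiter_plus pm m (fun e => A e * phi (e m)) (fun e => pl t e m)).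
  2: apply Good_of_Dm; auto; apply Dm_term; auto.
  2: apply Good_of_Dm; auto; apply Dm_pl; auto.
  rewrite IH; auto. f_equal.
  rewrite (Eiter_ext_loc pm m _ (fun e => phi (e m) * A e)) by (intros; ring).
  rewrite Eiter_pull. unfold upd at 1. rewrite Nat.eqb_refl. f_equal. apply Eiter_indep. auto.
  intros e j k Hj. unfold upd. destruct (Nat.eqb_spec m j). lia. auto. Qed.

Lemma peel_outer pm m L : PMok pm -> allok m L ->
  ex_series (fun n => pm m n * plI pm m L n) /\ Series (fun n => pm m n * plI pm m L n) = plv pm m L.
Proof. intros [Hp Hs]. induction L as [|Ap t IH]; intros H.
  - simpl. split. apply (exs_ext (fun n => 0 * pm m n)). intros; ring. apply exs_scal. 
    apply (exs_ext (fun n => pm m n * (1 + INR n) ^ 0)). intros; simpl; ring. auto.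
    transitivity (Series (fun n => 0 * pm m n)). apply Series_ext; intros; ring. rewrite Series_scal_l. ring.
  - destruct Ap as [A phi]. destruct H as [H1 [H2 [[K [d B]] H4]]]. destruct (IH H4) as [E1 S1]. simpl.
    assert (E0 : ex_series (fun n => pm m n * phi n)).
    { apply (exs_le _ (fun n => K * (pm m n * (1 + INR n) ^ d))). intros n. rewrite Rabs_mult, Rabs_pos_eq by auto.
      specialize (B n). replace (K * (pm m n * (1 + INR n) ^ d)) with (pm m n * (K * (1 + INR n) ^ d)) by ring.
      apply Rmult_le_compat_l; auto. apply exs_scal; auto. }
    assert (E0' : ex_series (fun n => Eiter pm m A (fun _ => O) * (pm m n * phi n))) by (apply exs_scal; auto).
    split.
    + apply (exs_ext (fun n => Eiter pm m A (fun _ => O) * (pm m n * phi n) + pm m n * plI pm m t n)).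
      intros; ring. apply exs_plus; auto.
    + rewrite <- S1, <- Series_scal_l, <- Series_plus; auto. apply Series_ext; intros; ring.
Qed.

Lemma peel pm m F L env : PMok pm -> allok m L -> (forall e, F e = pl L e m) ->
  Eiter pm (S m) F env = plv pm m L.
Proof. intros Hpm Hok HF. simpl.
  transitivity (Series (fun n => pm m n * plI pm m L n)).
  apply Series_ext. intros n. f_equal. rewrite <- (peel_inner pm m L env n); auto.
  apply Eiter_ext_loc. intros; auto.
  apply peel_outer; auto. Qed.

Ltac pos := first [ lra | nra | apply Rmult_lt_0_compat; pos | apply Rinv_0_lt_compat; pos | apply Rdiv_lt_0_compat; pos ].
Ltac sidec := repeat split; try exact I; match goal with |- _ <> 0 => apply Rgt_not_eq; pos | |- 0 < _ => pos | _ => idtac end.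

Lemma isd_plus (f g : R -> R) x df dg : is_derive f x df -> is_derive g x dg ->
  is_derive (fun y => f y + g y) x (df + dg).
Proof. intros. apply (is_derive_plus f g x df dg); auto. Qed.
Lemma isd_comp (f g : R -> R) x df dg : is_derive f (g x) df -> is_derive g x dg ->
  is_derive (fun y => f (g y)) x (dg * df).
Proof. intros. apply (is_derive_comp f g x df dg); auto. Qed.
Lemma isd_ext (f g : R -> R) x l : (forall t, f t = g t) -> is_derive f x l -> is_derive g x l.
Proof. intros. apply (is_derive_ext f g x l); auto. Qed.
Lemma isd_ext_loc (f g : R -> R) x l : locally x (fun t => f t = g t) -> is_derive f x l -> is_derive g x l.
Proof. intros. apply (is_derive_ext_loc f g x l); auto. Qed.
Lemma isd_const (c x : R) : is_derive (fun _ : R => c) x 0.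
Proof. apply (is_derive_const c x). Qed.

Lemma sumT_derive (F : nat -> R -> R) (dF : nat -> R) x T :
  (forall t, is_derive (F t) x (dF t)) -> is_derive (fun y => sumT T (fun t => F t y)) x (sumT T dF).
Proof. intros H. induction T; simpl. apply isd_const.
  apply (isd_plus (fun y => sumT T (fun t => F t y)) (F T)); auto. Qed.

Lemma locally_pos a : 0 < a -> locally a (fun t => 0 < t).
Proof. intros Ha. exists (mkposreal a Ha). intros y Hy. simpl in Hy. 
  unfold ball in Hy; simpl in Hy; unfold AbsRing_ball, abs, minus, plus, opp in Hy; simpl in Hy.
  apply Rabs_def2 in Hy. lra. Qed.

Lemma nb_pmf_pos l a n : 0 < a -> 0 < l -> 0 < nb_pmf l a n.
Proof. intros Ha Hl. unfold nb_pmf. assert (0 < a * l) by nra.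
  apply Rmult_lt_0_compat; [apply Rmult_lt_0_compat|].
  apply Rdiv_lt_0_compat. apply rising_pos. apply Rinv_0_lt_compat; lra. apply INR_fact_pos.
  unfold Rpower. apply exp_pos. apply pow_lt. apply Rdiv_lt_0_compat; lra. Qed.

Lemma ln_nb l a n : 0 < a -> 0 < l ->
  ln (nb_pmf l a n) = ln (rising (/ a) n / INR (fact n)) + / a * ln (/ (1 + a * l))
                      + INR n * ln (a * l / (1 + a * l)).
Proof. intros Ha Hl. unfold nb_pmf. assert (0 < a * l) by nra.
  assert (0 < rising (/ a) n / INR (fact n)). { apply Rdiv_lt_0_compat. apply rising_pos. apply Rinv_0_lt_compat; lra. apply INR_fact_pos. }
  assert (0 < a * l / (1 + a * l)) by (apply Rdiv_lt_0_compat; lra).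
  rewrite ln_mult, ln_mult; auto. unfold Rpower. rewrite ln_exp, ln_pow; auto.
  unfold Rpower; apply exp_pos. apply Rmult_lt_0_compat; auto. unfold Rpower; apply exp_pos.
  apply pow_lt; auto. Qed.

Lemma upd_derive (b : nat -> R) k j y : is_derive (fun z => upd b k z j) y (if Nat.eqb j k then 1 else 0).
Proof. unfold upd. destruct (Nat.eqb j k). apply (is_derive_id y). apply isd_const. Qed.

Lemma lin_derive (xt : nat -> R) (b : nat -> R) p k y :
  is_derive (fun z => sumT p (fun j => xt j * upd b k z j)) y (sumT p (fun j => xt j * (if Nat.eqb j k then 1 else 0))).
Proof. apply (sumT_derive (fun j z => xt j * upd b k z j)). intros j.
  apply (is_derive_scal (fun z => upd b k z j)). apply upd_derive. Qed.

Lemma sumT_zero n f : (forall j, (j < n)%nat -> f j = 0) -> sumT n f = 0.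
Proof. induction n; intros H; simpl. auto. rewrite IHn, H; auto. ring. Qed.

Lemma sumT_delta (xt : nat -> R) p k : (k < p)%nat -> sumT p (fun j => xt j * (if Nat.eqb j k then 1 else 0)) = xt k.
Proof. induction p; intros H. lia. simpl. destruct (Nat.eq_dec k p).
  subst. rewrite Nat.eqb_refl. rewrite sumT_zero; [ring|]. intros j Hj. destruct (Nat.eqb_spec j p). lia. ring.
  rewrite IHp by lia. destruct (Nat.eqb_spec p k). lia. ring. Qed.

Lemma g_derive a (C nn : R) z : 0 < a ->
  is_derive (fun z => C + / a * ln (/ (1 + a * exp z)) + nn * ln (a * exp z / (1 + a * exp z))) z
    ((nn - exp z) / (1 + a * exp z)).
Proof. intros Ha. pose proof (exp_pos z). assert (0 < a * exp z) by nra.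
  auto_derive.
  { assert (0 < / (1 + a * exp z)) by (apply Rinv_0_lt_compat; lra). repeat split; try lra. apply Rmult_lt_0_compat; lra. }
  field. repeat split; lra. Qed.

Lemma score_beta_eq T p x b a N k : 0 < a -> (k < p)%nat ->
  score_beta T p x b a N k = sumT T (fun t => (INR (N t) - lam p x b t) / (1 + a * lam p x b t) * x t k).
Proof.
  intros Ha Hk. unfold score_beta, loglik. apply is_derive_unique.
  apply (sumT_derive (fun t bk => ln (nb_pmf (lam p x (upd b k bk) t) a (N t)))).
  intros t.
  set (s := fun z => sumT p (fun j => x t j * upd b k z j)).
  set (g := fun z => ln (rising (/ a) (N t) / INR (fact (N t))) + / a * ln (/ (1 + a * exp z))
                     + INR (N t) * ln (a * exp z / (1 + a * exp z))).
  apply (isd_ext (fun bk => g (s bk))).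
  { intros bk. unfold g, s. rewrite ln_nb; auto. unfold lam. apply exp_pos. }
  assert (Hs : s (b k) = sumT p (fun j => x t j * b j)).
  { unfold s. apply sumT_ext. intros j _. unfold upd. destruct (Nat.eqb_spec j k); subst; auto. }
  replace ((INR (N t) - lam p x b t) / (1 + a * lam p x b t) * x t k)
    with (x t k * ((INR (N t) - exp (s (b k))) / (1 + a * exp (s (b k))))).
  2:{ rewrite Hs. unfold lam. ring. }
  apply isd_comp. apply g_derive; auto.
  rewrite <- (sumT_delta (x t) p k Hk). apply lin_derive.
Qed.

Lemma ln_rising r n : 0 < r -> ln (rising r n) = sumT n (fun j => ln (r + INR j)).
Proof. intros Hr. induction n. simpl. apply ln_1. simpl. rewrite ln_mult. rewrite IHn; auto.
  apply rising_pos; auto. pose proof (pos_INR n); lra. Qed.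

Lemma alpha_term_derive l a n : 0 < a -> 0 < l ->
  is_derive (fun a' => ln (nb_pmf l a' n)) a (saf a l n).
Proof.
  intros Ha Hl.
  apply (isd_ext_loc (fun a' => sumT n (fun j => ln (/ a' + INR j)) - ln (INR (fact n))
          + / a' * ln (/ (1 + a' * l)) + INR n * ln (a' * l / (1 + a' * l)))).
  { generalize (locally_pos a Ha). apply filter_imp. intros a' Ha'.
    rewrite ln_nb; auto.
    assert (E : ln (rising (/ a') n / INR (fact n)) = ln (rising (/ a') n) - ln (INR (fact n))).
    { unfold Rdiv. rewrite ln_mult, ln_Rinv. ring. apply INR_fact_pos. apply rising_pos, Rinv_0_lt_compat; lra.
      apply Rinv_0_lt_compat, INR_fact_pos. }
    rewrite E, ln_rising. ring. apply Rinv_0_lt_compat; lra. }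
  assert (Hc : 0 < 1 + a * l) by nra.
  replace (saf a l n) with (sumT n (fun j => - / a ^ 2 * / (/ a + INR j)) - 0
     + (- / a ^ 2 * ln (/ (1 + a * l)) + / a * (- l / (1 + a * l))) + INR n * (/ a - l / (1 + a * l))).
  2:{ unfold saf, rr, Dr. rewrite ln_Rinv by lra.
      assert (sumT n (fun j => - / a ^ 2 * / (/ a + INR j)) = - / a ^ 2 * sumT n (fun j => / (/ a + INR j))).
      { clear. induction n; cbn [sumT]. ring. rewrite IHn. ring. }
      rewrite H. field. lra. }
  apply isd_plus. apply isd_plus. apply (is_derive_minus (fun a' => sumT n (fun j => ln (/ a' + INR j))) (fun _ => ln (INR (fact n)))).
  apply (sumT_derive (fun j a' => ln (/ a' + INR j))). intros j. pose proof (pos_INR j).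
  assert (0 < / a) by (apply Rinv_0_lt_compat; lra).
  auto_derive. repeat split; try lra; apply Rgt_not_eq; lra. field. split; apply Rgt_not_eq; [lra|]. assert (0 <= INR j * a) by (apply Rmult_le_pos; lra). lra. apply isd_const.
  assert (0 < a * l) by nra. auto_derive. sidec. field. sidec.
  apply (is_derive_scal (fun a' => ln (a' * l / (1 + a' * l)))). auto_derive.
  sidec. field. sidec.
Qed.

Lemma score_alpha_eq T p x b a N : 0 < a ->
  score_alpha T p x b a N = sumT T (fun t => saf a (lam p x b t) (N t)).
Proof.
  intros Ha. unfold score_alpha, loglik. apply is_derive_unique.
  apply (sumT_derive (fun t a' => ln (nb_pmf (lam p x b t) a' (N t)))).
  intros t. apply alpha_term_derive; auto. unfold lam; apply exp_pos. Qed.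

Lemma d2_eq T p x b a N k : 0 < a -> (k < p)%nat ->
  d2_beta_alpha T p x b a N k =
  sumT T (fun t => - (INR (N t) - lam p x b t) * lam p x b t * x t k / (1 + a * lam p x b t) ^ 2).
Proof.
  intros Ha Hk. unfold d2_beta_alpha. apply is_derive_unique.
  apply (isd_ext_loc (fun a' => sumT T (fun t => (INR (N t) - lam p x b t) / (1 + a' * lam p x b t) * x t k))).
  { generalize (locally_pos a Ha). apply filter_imp. intros a' Ha'. rewrite score_beta_eq; auto. }
  apply (sumT_derive (fun t a' => (INR (N t) - lam p x b t) / (1 + a' * lam p x b t) * x t k)).
  intros t. assert (0 < lam p x b t) by (unfold lam; apply exp_pos).
  auto_derive. nra. field. nra.
Qed.



Lemma Dm_ext m f g : (forall e, f e = g e) -> Dm m f -> Dm m g.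
Proof. intros E [K [d [HK B]]]. exists K, d. split; auto. intros e; rewrite <- E; auto. Qed.
Lemma Dm_const m c : Dm m (fun _ => c).
Proof. exists (Rabs c), 0%nat. split. apply Rabs_pos. intros; simpl; lra. Qed.
Lemma Dm_mult m f g : Dm m f -> Dm m g -> Dm m (fun e => f e * g e).
Proof. intros [K1 [d1 [H1 B1]]] [K2 [d2 [H2 B2]]]. exists (K1 * K2), (d1 + d2)%nat. split. apply Rmult_le_pos; auto.
  intros e. rewrite Rabs_mult, pow_add.
  replace (K1 * K2 * (V1r 0 m e ^ d1 * V1r 0 m e ^ d2)) with ((K1 * V1r 0 m e ^ d1) * (K2 * V1r 0 m e ^ d2)) by ring.
  apply Rmult_le_compat; auto; apply Rabs_pos. Qed.
Lemma Dm_mono m f : Dm m f -> Dm (S m) f.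
Proof. intros [K [d [HK B]]]. exists K, d. split; auto. intros e. eapply Rle_trans. apply B.
  apply Rmult_le_compat_l; auto. apply pow_incr. pose proof (V1r_ge1 0 m e). split. lra.
  rewrite V1r_S0. pose proof (pos_INR (e m)). nra. Qed.
Lemma Dm_sumf m (h : nat -> nat -> R) : (forall t, PB (h t)) -> Dm m (fun e => sumT m (fun t => h t (e t))).
Proof. intros H. induction m. simpl. apply Dm_const.
  apply (Dm_plus _ (fun e => sumT m (fun t => h t (e t))) (fun e => h m (e m))). apply Dm_mono; auto.
  apply (Dm_ext _ (fun e => 1 * h m (e m))). intros; ring. apply Dm_term. apply Dm_const. auto. Qed.

Lemma Dep_const m c : Dep m (fun _ => c).
Proof. intros e e' _. auto. Qed.
Lemma Dep_mult m f g : Dep m f -> Dep m g -> Dep m (fun e => f e * g e).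
Proof. intros H1 H2 e e' H. rewrite (H1 e e'), (H2 e e'); auto. Qed.
Lemma Dep_sumf m (h : nat -> nat -> R) : Dep m (fun e => sumT m (fun t => h t (e t))).
Proof. intros e e' H. apply sumT_ext. intros k Hk. rewrite H; auto. Qed.
Lemma Dep_ext m f g : (forall e, f e = g e) -> Dep m f -> Dep m g.
Proof. intros E H e e' H'. rewrite <- !E. auto. Qed.

Lemma Eiter_one pm m e : (forall t, Series (fun n => pm t n * 1) = 1) -> Eiter pm m (fun _ => 1) e = 1.
Proof. intros H. revert e; induction m; intros e. reflexivity. simpl.
  transitivity (Series (fun n => pm m n * 1)). apply Series_ext. intros n. rewrite IHm. ring. auto. Qed.

Definition Et (pm : nat -> nat -> R) t (phi : nat -> R) := Series (fun n => pm t n * phi n).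

Lemma Et_scal pm t c phi : Et pm t (fun n => c * phi n) = c * Et pm t phi.
Proof. unfold Et. rewrite <- Series_scal_l. apply Series_ext; intros; ring. Qed.

Definition NiceP (pm : nat -> nat -> R) := PMok pm /\ forall t, Series (fun n => pm t n * 1) = 1.

Lemma mean0 pm (h : nat -> nat -> R) : NiceP pm -> (forall t, PB (h t)) -> (forall t, Et pm t (h t) = 0) ->
  forall m, Eiter pm m (fun e => sumT m (fun t => h t (e t))) (fun _ => O) = 0.
Proof. intros [Hpm Hm] Hb H0. induction m. reflexivity.
  rewrite (peel pm m _ [(fun e => sumT m (fun t => h t (e t)), fun _ => 1); (fun _ => 1, h m)]); auto.
  - simpl. rewrite IHm, Eiter_one; auto. fold (Et pm m (h m)). rewrite H0. ring.
  - cbn [allok]. repeat split; auto using Dm_sumf, Dep_sumf, Dm_const, Dep_const, PB_const.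
  - intros e. simpl. ring.
Qed.

Lemma sq_sum pm (h : nat -> nat -> R) : NiceP pm -> (forall t, PB (h t)) -> (forall t, Et pm t (h t) = 0) ->
  forall m, Eiter pm m (fun e => sumT m (fun t => h t (e t)) ^ 2) (fun _ => O)
            = sumT m (fun t => Et pm t (fun n => h t n ^ 2)).
Proof. intros HN Hb H0. pose proof HN as [Hpm Hm]. induction m. simpl. ring.
  rewrite (peel pm m _ [(fun e => sumT m (fun t => h t (e t)) ^ 2, fun _ => 1);
                        (fun e => sumT m (fun t => h t (e t)), fun n => 2 * h m n);
                        (fun _ => 1, fun n => h m n ^ 2)]); auto.
  - cbn [plv]. rewrite IHm, Eiter_one, mean0; auto. fold (Et pm m (fun n => h m n ^ 2)).
    fold (Et pm m (fun n => 2 * h m n)). rewrite Et_scal, H0, Hm. cbn [sumT]. ring.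
  - cbn [allok]. repeat split; auto using Dm_sumf, Dep_sumf, Dm_const, Dep_const, PB_const.
    apply (Dm_ext _ (fun e => sumT m (fun t => h t (e t)) * (sumT m (fun t => h t (e t)) * 1))). intros; simpl; ring.
    apply Dm_mult; auto using Dm_sumf. apply Dm_mult; auto using Dm_sumf, Dm_const.
    apply (Dep_ext _ (fun e => sumT m (fun t => h t (e t)) * (sumT m (fun t => h t (e t)) * 1))). intros; simpl; ring.
    apply Dep_mult; auto using Dep_sumf. apply Dep_mult; auto using Dep_sumf, Dep_const.
    apply PB_scal; auto. apply PB_pow; auto.
  - intros e. simpl. ring.
Qed.



Lemma nb_pnb l a n : 0 < a -> 0 < l -> nb_pmf l a n = pnb (rr a) (qq a l) n.
Proof. intros Ha Hl. unfold nb_pmf, pnb, cc, Zf, Rpower. rewrite one_minus_qq; auto. unfold rr, qq. ring. Qed.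

Lemma PB_uf a l : PB (uf a l).
Proof. unfold uf. pb. Qed.
Lemma PB_gf a l : PB (gf a l).
Proof. unfold gf, uf, vf. pb. Qed.
Lemma PB_saf a l : 0 < a -> PB (saf a l).
Proof. intros Ha. unfold saf. apply PB_plus. apply PB_scal. apply PB_minus. apply PB_const. apply PB_Dr. apply rr_pos; auto.
  pb. Qed.

Lemma Et_ext pm t f g : (forall n, f n = g n) -> Et pm t f = Et pm t g.
Proof. intros H. unfold Et. apply Series_ext. intros; rewrite H; auto. Qed.

Lemma nice_pm a (l : nat -> R) : 0 < a -> (forall t, 0 < l t) ->
  NiceP (fun t n => nb_pmf (l t) a n) /\
  forall t phi, Et (fun t n => nb_pmf (l t) a n) t phi = EE (rr a) (qq a (l t)) phi.
Proof. intros Ha Hl.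
  assert (HE : forall t phi, Et (fun t n => nb_pmf (l t) a n) t phi = EE (rr a) (qq a (l t)) phi).
  { intros t phi. unfold Et, EE. apply Series_ext. intros n. rewrite nb_pnb; auto. }
  split; auto. split. split.
  - intros t n. rewrite nb_pnb; auto. apply pnb_pos. apply rr_pos; auto. apply qq_range; auto.
  - intros t d. apply (exs_ext (fun n => pnb (rr a) (qq a (l t)) n * (1 + INR n) ^ d)).
    intros n. rewrite nb_pnb; auto. apply ex_pnb. apply rr_pos; auto. apply qq_range; auto. pb.
  - intros t. fold (Et (fun t n => nb_pmf (l t) a n) t (fun _ => 1)). rewrite HE. apply EE_mass.
    apply rr_pos; auto. apply qq_range; auto.
Qed.

Lemma DS_S (y : nat -> R) m :
  sumT (S m) (fun t => sumT (S m) (fun t' => if (t <? t')%nat then y t * y t' else 0))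
  = sumT m (fun t => sumT m (fun t' => if (t <? t')%nat then y t * y t' else 0)) + sumT m y * y m.
Proof.
  cbn [sumT]. rewrite (sumT_zero m (fun t' => if (m <? t')%nat then y m * y t' else 0)). 2:{ intros j Hj. destruct (Nat.ltb_spec m j). lia. auto. }
  assert (forall n, (n <= m)%nat -> sumT n (fun t => sumT m (fun t' => if (t <? t')%nat then y t * y t' else 0) +
     (if (t <? m)%nat then y t * y m else 0)) = sumT n (fun t => sumT m (fun t' => if (t <? t')%nat then y t * y t' else 0)) + sumT n y * y m).
  { induction n; intros Hn. simpl. ring. cbn [sumT]. rewrite IHn by lia. destruct (Nat.ltb_spec n m). ring. lia. }
  rewrite H by lia. destruct (Nat.ltb_spec m m). lia. ring.
Qed.

Lemma Dm_sq m f : Dm m f -> Dm m (fun e => f e ^ 2).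
Proof. intros H. apply (Dm_ext _ (fun e => f e * (f e * 1))). intros; simpl; ring.
  apply Dm_mult; auto. apply Dm_mult; auto. apply Dm_const. Qed.
Lemma Dep_sq m f : Dep m f -> Dep m (fun e => f e ^ 2).
Proof. intros H e e' H'. rewrite (H e e'); auto. Qed.
Lemma Dep_plus m f g : Dep m f -> Dep m g -> Dep m (fun e => f e + g e).
Proof. intros H1 H2 e e' H. rewrite (H1 e e'), (H2 e e'); auto. Qed.

Definition Sf a (l : nat -> R) m (e : nat -> nat) := sumT m (fun t => uf a (l t) (e t)).
Definition SAf a (l : nat -> R) m (e : nat -> nat) := sumT m (fun t => saf a (l t) (e t)).
Definition Bf a (l : nat -> R) (x : nat -> nat -> R) k m (e : nat -> nat) := sumT m (fun t => uf a (l t) (e t) * x t k).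

Lemma Dm_Sf a l m : Dm m (Sf a l m).
Proof. apply (Dm_sumf m (fun t => uf a (l t))). intros; apply PB_uf. Qed.
Lemma Dep_Sf a l m : Dep m (Sf a l m).
Proof. apply (Dep_sumf m (fun t => uf a (l t))). Qed.
Lemma Dm_SAf a l m : 0 < a -> Dm m (SAf a l m).
Proof. intros. apply (Dm_sumf m (fun t => saf a (l t))). intros; apply PB_saf; auto. Qed.
Lemma Dep_SAf a l m : Dep m (SAf a l m).
Proof. apply (Dep_sumf m (fun t => saf a (l t))). Qed.
Lemma Dm_Bf a l x k m : Dm m (Bf a l x k m).
Proof. apply (Dm_sumf m (fun t n => uf a (l t) n * x t k)). intros; apply PB_mult. apply PB_uf. apply PB_const. Qed.
Lemma Dep_Bf a l x k m : Dep m (Bf a l x k m).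
Proof. apply (Dep_sumf m (fun t n => uf a (l t) n * x t k)). Qed.

Lemma Q_form a l m e : score_sigma2 m l a e =
  / 2 * (Sf a l m e * Sf a l m e) + (- / 2) * sumT m (fun t => vf a (l t) (e t)).
Proof. unfold score_sigma2, Sf, uf, vf. ring. Qed.
Lemma Dm_Q a l m : Dm m (fun e => score_sigma2 m l a e).
Proof. apply (Dm_ext _ (fun e => / 2 * (Sf a l m e * Sf a l m e) + (- / 2) * sumT m (fun t => vf a (l t) (e t)))).
  intros; rewrite Q_form; auto.
  apply Dm_plus; apply Dm_mult; try apply Dm_const. apply Dm_mult; apply Dm_Sf.
  apply (Dm_sumf m (fun t => vf a (l t))). intros; unfold vf; pb. Qed.
Lemma Dep_Q a l m : Dep m (fun e => score_sigma2 m l a e).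
Proof. apply (Dep_ext _ (fun e => / 2 * (Sf a l m e * Sf a l m e) + (- / 2) * sumT m (fun t => vf a (l t) (e t)))).
  intros; rewrite Q_form; auto.
  apply Dep_plus; apply Dep_mult; try apply Dep_const. apply Dep_mult; apply Dep_Sf.
  apply (Dep_sumf m (fun t => vf a (l t))). Qed.

Lemma Q_S a l m e : score_sigma2 (S m) l a e =
  score_sigma2 m l a e + uf a (l m) (e m) * Sf a l m e + / 2 * gf a (l m) (e m).
Proof. rewrite !Q_form. unfold Sf, gf. cbn [sumT]. set (A := sumT m (fun t : nat => uf a (l t) (e t))). set (B := sumT m (fun t : nat => vf a (l t) (e t))). set (u := uf a (l m) (e m)). set (v := vf a (l m) (e m)). field. Qed.


Lemma claim1 a (l : nat -> R) : 0 < a -> (forall t, 0 < l t) ->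
  let pm := fun t n => nb_pmf (l t) a n in
  forall m, Eiter pm m (fun N => score_sigma2 m l a N ^ 2) (fun _ => O)
    = / 4 * (sumT m (fun t => 2 * l t ^ 2 * (1 + a) / (1 + a * l t) ^ 2)
             + 4 * sumT m (fun t => sumT m (fun t' =>
                   if (t <? t')%nat then
                     l t * (1 + a * l t) / (1 + a * l t) ^ 2
                     * (l t' * (1 + a * l t') / (1 + a * l t') ^ 2)
                   else 0))).
Proof.
  intros Ha Hl pm. destruct (nice_pm a l Ha Hl) as [HN HE]. fold pm in HN, HE.
  pose proof HN as [Hpm Hmass].
  assert (HS0 : forall m, Eiter pm m (Sf a l m) (fun _ => O) = 0).
  { intros m. apply (mean0 pm (fun t => uf a (l t))); auto. intros; apply PB_uf.
    intros t. rewrite HE. apply per_coord; auto. }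
  assert (HSS : forall m, Eiter pm m (fun e => Sf a l m e ^ 2) (fun _ => O) =
      sumT m (fun t => l t * (1 + a * l t) / (1 + a * l t) ^ 2)).
  { intros m. rewrite (sq_sum pm (fun t => uf a (l t))); auto. apply sumT_ext. intros t _. rewrite HE.
    apply per_coord; auto. intros; apply PB_uf. intros t. rewrite HE. apply per_coord; auto. }
  induction m.
  - simpl. unfold score_sigma2. simpl. field.
  - rewrite (peel pm m _ [(fun e => score_sigma2 m l a e ^ 2, fun _ => 1);
        (fun e => Sf a l m e ^ 2, fun n => uf a (l m) n ^ 2);
        (fun _ => 1, fun n => gf a (l m) n ^ 2 / 4);
        (fun e => score_sigma2 m l a e * Sf a l m e, fun n => 2 * uf a (l m) n);
        (fun e => score_sigma2 m l a e, gf a (l m));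
        (fun e => Sf a l m e, fun n => uf a (l m) n * gf a (l m) n)]); auto.
    + cbn [plv]. rewrite IHm, HSS, HS0, Eiter_one; auto.
      fold (Et pm m (fun _ => 1)) (Et pm m (fun n => uf a (l m) n ^ 2)) (Et pm m (fun n => gf a (l m) n ^ 2 / 4))
        (Et pm m (fun n => 2 * uf a (l m) n)) (Et pm m (gf a (l m))) (Et pm m (fun n => uf a (l m) n * gf a (l m) n)).
      rewrite (Et_ext pm m (fun n => gf a (l m) n ^ 2 / 4) (fun n => / 4 * gf a (l m) n ^ 2)) by (intros; unfold Rdiv; ring).
      rewrite !Et_scal, !HE.
      destruct (per_coord a (l m) Ha (Hl m)) as [P1 [P2 [P3 [P4 P5]]]].
      rewrite P1, P2, P3, P4, P5, EE_mass; auto. 2: apply rr_pos; auto. 2: apply qq_range; auto.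
      rewrite (DS_S (fun t => l t * (1 + a * l t) / (1 + a * l t) ^ 2)). cbn [sumT]. field. assert (0 < 1 + a * l m) by (pose proof (Hl m); nra). lra.
    + cbn [allok]. 
      assert (DQ := Dm_Q a l m). assert (EQ := Dep_Q a l m).
      repeat split; auto using Dm_sq, Dep_sq, Dm_Sf, Dep_Sf, Dm_const, Dep_const, PB_const, Dm_mult, Dep_mult.
      apply PB_pow, PB_uf. apply PB_div, PB_pow, PB_gf. apply PB_scal, PB_uf. apply PB_gf. apply PB_mult. apply PB_uf. apply PB_gf.
    + intros e. cbn [pl]. rewrite Q_S. field.
Qed.

Lemma claim2 a (l : nat -> R) (x : nat -> nat -> R) k : 0 < a -> (forall t, 0 < l t) ->
  let pm := fun t n => nb_pmf (l t) a n in
  forall m, Eiter pm m (fun N => score_sigma2 m l a N * Bf a l x k m N) (fun _ => O) = 0.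
Proof.
  intros Ha Hl pm. destruct (nice_pm a l Ha Hl) as [HN HE]. fold pm in HN, HE.
  pose proof HN as [Hpm Hmass].
  assert (HS0 : forall m, Eiter pm m (Sf a l m) (fun _ => O) = 0).
  { intros m. apply (mean0 pm (fun t => uf a (l t))); auto. intros; apply PB_uf.
    intros t. rewrite HE. apply per_coord; auto. }
  induction m.
  - simpl. unfold Bf. simpl. ring.
  - rewrite (peel pm m _ [(fun e => score_sigma2 m l a e * Bf a l x k m e, fun _ => 1);
        (fun e => score_sigma2 m l a e, fun n => uf a (l m) n * x m k);
        (fun e => Sf a l m e * Bf a l x k m e, uf a (l m));
        (fun e => Sf a l m e, fun n => uf a (l m) n ^ 2 * x m k);
        (fun e => Bf a l x k m e, fun n => / 2 * gf a (l m) n);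
        (fun _ => 1, fun n => / 2 * gf a (l m) n * (uf a (l m) n * x m k))]); auto.
    + cbn [plv]. rewrite IHm, HS0, Eiter_one; auto.
      fold (Et pm m (fun n => uf a (l m) n * x m k)) (Et pm m (uf a (l m)))
        (Et pm m (fun n => / 2 * gf a (l m) n)) (Et pm m (fun n => / 2 * gf a (l m) n * (uf a (l m) n * x m k))).
      rewrite (Et_ext pm m (fun n => uf a (l m) n * x m k) (fun n => x m k * uf a (l m) n)) by (intros; ring).
      rewrite (Et_ext pm m (fun n => / 2 * gf a (l m) n * (uf a (l m) n * x m k)) (fun n => (/ 2 * x m k) * (uf a (l m) n * gf a (l m) n))) by (intros; ring).
      rewrite !Et_scal, !HE.
      destruct (per_coord a (l m) Ha (Hl m)) as [P1 [P2 [P3 [P4 P5]]]].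
      rewrite P1, P3, P4. ring.
    + cbn [allok]. 
      assert (DQ := Dm_Q a l m). assert (EQ := Dep_Q a l m).
      assert (DB := Dm_Bf a l x k m). assert (EB := Dep_Bf a l x k m).
      repeat split; auto using Dm_Sf, Dep_Sf, Dm_const, Dep_const, PB_const, Dm_mult, Dep_mult, PB_uf.
      apply PB_mult. apply PB_uf. apply PB_const. apply PB_mult. apply PB_pow, PB_uf. apply PB_const.
      apply PB_scal, PB_gf. apply PB_mult. apply PB_scal, PB_gf. apply PB_mult. apply PB_uf. apply PB_const.
    + intros e. cbn [pl]. rewrite Q_S. unfold Bf. cbn [sumT]. fold (Bf a l x k m e). field.
Qed.

Lemma claim3 a (l : nat -> R) : 0 < a -> (forall t, 0 < l t) ->
  let pm := fun t n => nb_pmf (l t) a n in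
  forall m, Eiter pm m (fun N => score_sigma2 m l a N * SAf a l m N) (fun _ => O)
    = / 2 * sumT m (fun t => l t ^ 2 / (1 + a * l t) ^ 2).
Proof.
  intros Ha Hl pm. destruct (nice_pm a l Ha Hl) as [HN HE]. fold pm in HN, HE.
  pose proof HN as [Hpm Hmass].
  assert (HS0 : forall m, Eiter pm m (Sf a l m) (fun _ => O) = 0).
  { intros m. apply (mean0 pm (fun t => uf a (l t))); auto. intros; apply PB_uf.
    intros t. rewrite HE. apply per_coord; auto. }
  induction m.
  - simpl. unfold SAf, score_sigma2. simpl. field.
  - rewrite (peel pm m _ [(fun e => score_sigma2 m l a e * SAf a l m e, fun _ => 1);
        (fun e => score_sigma2 m l a e, saf a (l m));
        (fun e => Sf a l m e * SAf a l m e, uf a (l m));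
        (fun e => Sf a l m e, fun n => uf a (l m) n * saf a (l m) n);
        (fun e => SAf a l m e, fun n => / 2 * gf a (l m) n);
        (fun _ => 1, fun n => / 2 * (gf a (l m) n * saf a (l m) n))]); auto.
    + cbn [plv]. rewrite IHm, HS0, Eiter_one; auto.
      fold (Et pm m (fun _ => 1)) (Et pm m (saf a (l m))) (Et pm m (uf a (l m)))
        (Et pm m (fun n => / 2 * gf a (l m) n)) (Et pm m (fun n => / 2 * (gf a (l m) n * saf a (l m) n))).
      rewrite !Et_scal, !HE.
      destruct (per_coord a (l m) Ha (Hl m)) as [P1 [P2 [P3 [P4 P5]]]].
      destruct (sa_facts a (l m) Ha (Hl m)) as [Q1 [Q2 Q3]].
      rewrite P1, P3, Q1, Q2, EE_mass; auto. 2: apply rr_pos; auto. 2: apply qq_range; auto.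
      cbn [sumT]. ring.
    + cbn [allok]. 
      assert (DQ := Dm_Q a l m). assert (EQ := Dep_Q a l m).
      assert (DB := Dm_SAf a l m Ha). assert (EB := Dep_SAf a l m).
      repeat split; auto using Dm_Sf, Dep_Sf, Dm_const, Dep_const, PB_const, Dm_mult, Dep_mult, PB_uf, PB_saf.
      apply PB_mult. apply PB_uf. apply PB_saf; auto.
      apply PB_scal, PB_gf. apply PB_scal. apply PB_mult. apply PB_gf. apply PB_saf; auto.
    + intros e. cbn [pl]. rewrite Q_S. unfold SAf. cbn [sumT]. fold (SAf a l m e). field.
Qed.

Lemma sumT_opp n f : - sumT n f = sumT n (fun t => - f t).
Proof. induction n; simpl. ring. rewrite <- IHn. ring. Qed.

Theorem lemma1 (T p : nat) (x : nat -> nat -> R) (b : nat -> R) (a : R) :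
  0 < a ->
  let l := lam p x b in
  let pm := fun t n => nb_pmf (l t) a n in
  Expect T pm (fun N => (score_sigma2 T l a N) ^ 2)
    = / 4 * (sumT T (fun t => 2 * l t ^ 2 * (1 + a) / (1 + a * l t) ^ 2)
             + 4 * sumT T (fun t => sumT T (fun t' =>
                   if (t <? t')%nat then
                     l t * (1 + a * l t) / (1 + a * l t) ^ 2
                     * (l t' * (1 + a * l t') / (1 + a * l t') ^ 2)
                   else 0)))
  /\ (forall k, (k < p)%nat ->
        Expect T pm (fun N => score_sigma2 T l a N * score_beta T p x b a N k) = 0)
  /\ Expect T pm (fun N => score_sigma2 T l a N * score_alpha T p x b a N)
       = / 2 * sumT T (fun t => l t ^ 2 / (1 + a * l t) ^ 2)
  /\ (forall k, (k < p)%nat ->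
        Expect T pm (fun N => - d2_beta_alpha T p x b a N k) = 0)
  /\ Expect T pm (fun N => (score_alpha T p x b a N) ^ 2)
       = sumT T (fun t => / a ^ 4 *
           (Series (fun j => / (/ a + INR j) ^ 2 * tail_prob (pm t) (S j))
            - a * l t / (l t + / a))).
Proof.
  intros Ha l pm.
  assert (Hl : forall t, 0 < l t) by (intros; unfold l, lam; apply exp_pos).
  destruct (nice_pm a l Ha Hl) as [HN HE]. fold pm in HN, HE.
  unfold Expect. repeat split.
  - apply claim1; auto.
  - intros k Hk. rewrite <- (claim2 a l x k Ha Hl T). fold pm. apply Eiter_ext_loc. intros e _.
    rewrite score_beta_eq; auto.
  - rewrite <- (claim3 a l Ha Hl T). fold pm. apply Eiter_ext_loc. intros e _.
    rewrite score_alpha_eq; auto.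
  - intros k Hk.
    rewrite <- (mean0 pm (fun t n => (INR n - l t) * l t * x t k / (1 + a * l t) ^ 2) HN) with (m := T).
    + apply Eiter_ext_loc. intros e _. rewrite d2_eq; auto. rewrite sumT_opp. apply sumT_ext. intros t _.
      fold l. unfold Rdiv. ring.
    + intros t. apply PB_div. apply PB_mult. apply PB_mult. apply PB_minus. apply PB_INR. apply PB_const.
      apply PB_const. apply PB_const.
    + intros t. rewrite HE.
      rewrite (EE_ext _ _ _ (fun n => (l t * x t k / (1 + a * l t)) * uf a (l t) n)).
      rewrite EE_scal. destruct (per_coord a (l t) Ha (Hl t)) as [P1 _]. rewrite P1. ring.
      intros n. unfold uf. field. pose proof (Hl t). nra.
  - rewrite (Eiter_ext_loc pm T _ (fun e => sumT T (fun t => saf a (l t) (e t)) ^ 2)).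
    2:{ intros e _. rewrite score_alpha_eq; auto. }
    rewrite (sq_sum pm (fun t => saf a (l t)) HN).
    + apply sumT_ext. intros t _. rewrite HE.
      destruct (sa_facts a (l t) Ha (Hl t)) as [_ [_ Q3]]. rewrite Q3. f_equal. f_equal.
      apply Series_ext. intros j. f_equal. unfold tail_prob. apply Series_ext. intros n.
      unfold pm. rewrite nb_pnb; auto.
    + intros t. apply PB_saf; auto.
    + intros t. rewrite HE. destruct (sa_facts a (l t) Ha (Hl t)) as [Q1 _]. auto.
Qed.
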